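(* Fix $\mu\ge0$ and $\tau_0\in W^{1,\infty}((0,L);S^{n-1})$. Suppose that for every $p\in[2,\infty)$, $\tau_p\in W^{1,p}((0,L);S^{n-1})$, let $k_p=K_p(\tau_p)$, and suppose $\limsup_{p\to\infty}k_p<\infty$ and there exist $\Lambda_p\in\mathbb{R}^n$ such that \[ \frac{d}{dt}\bigl(|\tau_p'|^{p-2}\tau_p'\bigr)+|\tau_p'|^p\tau_p=k_p^{p-1}\beta\bigl(\Lambda_p-(\Lambda_p\cdot\tau_p)\tau_p-\mu\tau_0+\mu(\tau_0\cdot\tau_p)\tau_p\bigr) \] holds weakly in $(0,L)$ for every $p\in[2,\infty)$. Then either $\limsup_{p\to\infty}p^{-6}|\Lambda_p|<\infty$, or there is a sequence $p_i\to\infty$ such that $\tau_{p_i}$ converges uniformly to a constant vector as $i\to\infty$.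
   Context: $n\ge2$, $\ell>0$, $\alpha\colon[0,\ell]\to(0,\infty)$ of bounded variation with $1/\alpha$ bounded; $\psi(s)=\int_0^sd\sigma/\alpha(\sigma)$, $L=\psi(\ell)$, $\phi=\psi^{-1}$, $\beta=\alpha\circ\phi\colon[0,L]\to(0,\infty)$. $K_p(\tau)=\bigl(\frac1L\int_0^L|\tau'|^p\,dt\bigr)^{1/p}$. *)

(* Defs.v *)
From Stdlib Require Import Reals Lra List.
Open Scope R_scope.
Open Scope list_scope.

(* ---------- finite sums and vectors in R^n (components i < n) ---------- *)
Fixpoint fsum (n : nat) (f : nat -> R) : R :=
  match n with O => 0 | S m => fsum m f + f m end.

Definition vec := nat -> R.
Definition dot (n : nat) (u v : vec) : R := fsum n (fun i => u i * v i).
Definition vnorm (n : nat) (u : vec) : R := sqrt (dot n u u).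
Definition vsub (u v : vec) : vec := fun i => u i - v i.

(* real power x^y for x >= 0, with the convention 0^y = 0 (only used with y > 0,
   or multiplied by a factor vanishing where x = 0) *)
Definition rpow (x y : R) : R := if Rle_dec x 0 then 0 else Rpower x y.

(* A tagged partition is a list of (tag, right endpoint); intervals are
   [previous endpoint, right endpoint]. *)
Fixpoint fine (delta : R -> R) (a b : R) (P : list (R * R)) : Prop :=
  match P with
  | nil => a = b
  | (t, x) :: P' =>
      a < x /\ a <= t <= x /\ t - delta t < a /\ x < t + delta t /\ fine delta x b P'
  end.

Fixpoint rsum (f : R -> R) (a : R) (P : list (R * R)) : R :=
  match P with
  | nil => 0
  | (t, x) :: P' => f t * (x - a) + rsum f x P'
  end.

Definition HKint (f : R -> R) (a b I : R) : Prop :=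
  a <= b /\
  forall eps, 0 < eps ->
    exists delta : R -> R, (forall t, 0 < delta t) /\
      forall P, fine delta a b P -> Rabs (rsum f a P - I) < eps.

Definition HKintegrable (f : R -> R) (a b : R) : Prop := exists I, HKint f a b I.

(* Lebesgue measurability on [a,b]: every truncation is (Lebesgue, equivalently
   gauge) integrable on [a,b]; bounded gauge-integrable = bounded Lebesgue
   integrable = bounded measurable on a bounded interval. *)
Definition trunc (M : R) (f : R -> R) : R -> R := fun t => Rmax (- M) (Rmin M (f t)).
Definition measurable_on (f : R -> R) (a b : R) : Prop :=
  forall M, 0 < M -> HKintegrable (trunc M f) a b.

Definition Lp_vec (n : nat) (p : R) (g : R -> vec) (a b : R) : Prop :=
  (forall i, (i < n)%nat -> measurable_on (fun t => g t i) a b) /\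
  HKintegrable (fun t => rpow (vnorm n (g t)) p) a b.

Definition Linf_vec (n : nat) (g : R -> vec) (a b : R) : Prop :=
  (forall i, (i < n)%nat -> measurable_on (fun t => g t i) a b) /\
  exists M, forall t, a <= t <= b -> vnorm n (g t) <= M.

(* tau is (the continuous representative of) the primitive of g on [0,L]:
   tau t = tau 0 + int_0^t g, so g is the weak derivative tau'. *)
Definition primitive_of (n : nat) (L : R) (tau g : R -> vec) : Prop :=
  forall i, (i < n)%nat -> forall t, 0 <= t <= L ->
    HKint (fun s => g s i) 0 t (tau t i - tau 0 i).

Definition W1p_sphere (n : nat) (p L : R) (tau g : R -> vec) : Prop :=
  primitive_of n L tau g /\ Lp_vec n p g 0 L /\
  forall t, 0 <= t <= L -> vnorm n (tau t) = 1.

Definition W1inf_sphere (n : nat) (L : R) (tau g : R -> vec) : Prop :=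
  primitive_of n L tau g /\ Linf_vec n g 0 L /\
  forall t, 0 <= t <= L -> vnorm n (tau t) = 1.

Definition is_Kp (n : nat) (p L : R) (g : R -> vec) (k : R) : Prop :=
  exists I, HKint (fun t => rpow (vnorm n (g t)) p) 0 L I /\ k = rpow (I / L) (/ p).

Definition test_fun (a b : R) (phi dphi : R -> R) : Prop :=
  (exists D : nat -> R -> R, D O = phi /\ D 1%nat = dphi /\
    forall k x, derivable_pt_lim (D k) x (D (S k) x)) /\
  exists c d, a < c /\ c < d /\ d < b /\ forall t, (t < c \/ d < t) -> phi t = 0.

(* d/dt V + A = F weakly on (0,L), componentwise (i < n):
   for every test function phi,  int_0^L ( - V_i phi' + (A_i - F_i) phi ) = 0 *)
Definition weak_eq (n : nat) (L : R) (V A F : R -> vec) : Prop :=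
  forall i, (i < n)%nat -> forall phi dphi, test_fun 0 L phi dphi ->
    HKint (fun t => - V t i * dphi t + (A t i - F t i) * phi t) 0 L 0.

Definition bounded_variation (f : R -> R) (a b : R) : Prop :=
  exists M, forall (x : nat -> R) (m : nat),
    (forall i, (i <= m)%nat -> a <= x i <= b) ->
    (forall i, (i < m)%nat -> x i <= x (S i)) ->
    fsum m (fun i => Rabs (f (x (S i)) - f (x i))) <= M.

(* Main.v *)
Require Import Defs.
From Stdlib Require Import Reals Lra Lia List ClassicalEpsilon.
From Coquelicot Require Coquelicot.
Open Scope R_scope.

Lemma fsum_ext n f g : (forall i, (i < n)%nat -> f i = g i) -> fsum n f = fsum n g.
Proof. induction n; simpl; intros H; auto. rewrite IHn by (intros; apply H; lia). rewrite H by lia. auto. Qed.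
Lemma fsum_plus n f g : fsum n (fun i => f i + g i) = fsum n f + fsum n g.
Proof. induction n; simpl; [lra|]. rewrite IHn; lra. Qed.
Lemma fsum_scal n c f : fsum n (fun i => c * f i) = c * fsum n f.
Proof. induction n; simpl; [lra|]. rewrite IHn; lra. Qed.
Lemma fsum_le n f g : (forall i, (i < n)%nat -> f i <= g i) -> fsum n f <= fsum n g.
Proof. induction n; simpl; intros H; [lra|]. assert (f n <= g n) by (apply H; lia).
 assert (fsum n f <= fsum n g) by (apply IHn; intros; apply H; lia). lra. Qed.
Lemma fsum_nonneg n f : (forall i, (i < n)%nat -> 0 <= f i) -> 0 <= fsum n f.
Proof. intros H. replace 0 with (fsum n (fun _ => 0)). apply fsum_le; auto.
 induction n; simpl; auto. rewrite IHn; [lra|intros; apply H; lia]. Qed.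
Lemma fsum_abs n f : Rabs (fsum n f) <= fsum n (fun i => Rabs (f i)).
Proof. induction n; simpl. rewrite Rabs_R0; lra.
 eapply Rle_trans. apply Rabs_triang. lra. Qed.
Lemma fsum_const n c : fsum n (fun _ => c) = INR n * c.
Proof. induction n; cbn [fsum]; [simpl; lra|]. rewrite IHn. rewrite S_INR. lra. Qed.
Lemma fsum_term_le n f j : (forall i, (i < n)%nat -> 0 <= f i) -> (j < n)%nat -> f j <= fsum n f.
Proof. induction n; intros H Hj; [lia|]. simpl.
 assert (0 <= fsum n f) by (apply fsum_nonneg; intros; apply H; lia).
 destruct (Nat.eq_dec j n). subst; lra.
 assert (f j <= fsum n f) by (apply IHn; [intros; apply H; lia| lia]).
 assert (0 <= f n) by (apply H; lia). lra. Qed.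

Lemma dot_nonneg n u : 0 <= dot n u u.
Proof. unfold dot. apply fsum_nonneg. intros. nra. Qed.
Lemma vnorm_nonneg n u : 0 <= vnorm n u.
Proof. unfold vnorm. apply sqrt_pos. Qed.
Lemma comp_le_vnorm n u i : (i < n)%nat -> Rabs (u i) <= vnorm n u.
Proof. intros Hi. unfold vnorm. rewrite <- sqrt_Rsqr_abs. apply sqrt_le_1_alt.
 unfold Rsqr, dot. apply (fsum_term_le n (fun i => u i * u i) i); auto. intros; nra. Qed.
Lemma vnorm_le_sum n u : vnorm n u <= fsum n (fun i => Rabs (u i)).
Proof. unfold vnorm. assert (H0: 0 <= fsum n (fun i => Rabs (u i))) by (apply fsum_nonneg; intros; apply Rabs_pos).
 rewrite <- (sqrt_Rsqr _ H0). apply sqrt_le_1_alt. unfold Rsqr, dot.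
 induction n; simpl; [lra|].
 assert (0 <= fsum n (fun i => Rabs (u i))) by (apply fsum_nonneg; intros; apply Rabs_pos).
 specialize (IHn H). pose proof (Rabs_pos (u n)).
 assert (u n * u n = Rabs (u n) * Rabs (u n)) by (rewrite <- Rabs_mult; rewrite Rabs_right; nra).
 nra. Qed.

Lemma fine_le d a b P : fine d a b P -> a <= b.
Proof. revert a. induction P as [|[t x] P IH]; simpl; intros a H. lra.
 destruct H as (H1&H2&H3&H4&H5). apply IH in H5. lra. Qed.

Lemma fine_mono d1 d2 a b P : (forall t, d1 t <= d2 t) -> fine d1 a b P -> fine d2 a b P.
Proof. intros Hd. revert a. induction P as [|[t x] P IH]; simpl; intros a H; auto.
 destruct H as (H1&H2&H3&H4&H5). specialize (Hd t). repeat split; try lra. auto. Qed.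

Lemma fine_app d a b c P1 P2 : fine d a b P1 -> fine d b c P2 -> fine d a c (P1 ++ P2).
Proof. revert a. induction P1 as [|[t x] P IH]; simpl; intros a H1 H2. subst; auto.
 destruct H1 as (?&?&?&?&?). split; [auto| split; [auto| split; [auto | split; [auto| apply IH; auto]]]]. Qed.

Lemma rsum_app f d a b P1 P2 : fine d a b P1 -> rsum f a (P1 ++ P2) = rsum f a P1 + rsum f b P2.
Proof. revert a. induction P1 as [|[t x] P IH]; simpl; intros a H1. subst; lra.
 destruct H1 as (?&?&?&?&?). rewrite (IH x); auto. lra. Qed.

Lemma rsum_le f g d a b P : (forall t, a <= t <= b -> f t <= g t) -> fine d a b P -> rsum f a P <= rsum g a P.
Proof. revert a. induction P as [|[t x] P IH]; simpl; intros a Hfg H. lra.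
 destruct H as (H1&H2&H3&H4&H5). pose proof (fine_le _ _ _ _ H5).
 assert (f t <= g t) by (apply Hfg; lra).
 assert (rsum f x P <= rsum g x P) by (apply IH; auto; intros; apply Hfg; lra). nra. Qed.

Lemma rsum_plus f g a P : rsum (fun t => f t + g t) a P = rsum f a P + rsum g a P.
Proof. revert a. induction P as [|[t x] P IH]; simpl; intros; [lra|]. rewrite IH; lra. Qed.
Lemma rsum_scal c f a P : rsum (fun t => c * f t) a P = c * rsum f a P.
Proof. revert a. induction P as [|[t x] P IH]; simpl; intros; [lra|]. rewrite IH; lra. Qed.
Lemma rsum_ext f g a P : (forall t, f t = g t) -> rsum f a P = rsum g a P.
Proof. intros H. revert a. induction P as [|[t x] P IH]; simpl; intros; [lra|]. rewrite IH, H; lra. Qed.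
Lemma rsum_const c d a b P : fine d a b P -> rsum (fun _ => c) a P = c * (b - a).
Proof. revert a. induction P as [|[t x] P IH]; simpl; intros a H. subst; lra.
 destruct H as (?&?&?&?&?). rewrite IH; auto. lra. Qed.
Lemma rsum_fsum n f a P : rsum (fun t => fsum n (fun i => f i t)) a P = fsum n (fun i => rsum (f i) a P).
Proof. induction n; simpl. revert a; induction P as [|[t x] P IH]; simpl; intros; [lra|]. rewrite IH; lra.
 rewrite <- IHn. rewrite <- rsum_plus. apply rsum_ext. auto. Qed.
Lemma rsum_nonneg f d a b P : (forall t, a <= t <= b -> 0 <= f t) -> fine d a b P -> 0 <= rsum f a P.
Proof. intros H HP. replace 0 with (rsum (fun _ => 0) a P). eapply rsum_le; eauto.
 rewrite (rsum_const 0 d a b P HP). lra. Qed.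
Lemma rsum_abs f d a b P : fine d a b P -> Rabs (rsum f a P) <= rsum (fun t => Rabs (f t)) a P.
Proof. revert a. induction P as [|[t x] P IH]; simpl; intros a H. rewrite Rabs_R0; lra.
 destruct H as (?&?&?&?&?). eapply Rle_trans. apply Rabs_triang.
 rewrite Rabs_mult. rewrite (Rabs_right (x - a)) by lra. specialize (IH x H3). lra. Qed.

Lemma cousin d a b : (forall t, 0 < d t) -> a <= b -> exists P, fine d a b P.
Proof. intros Hd Hab.
 set (E := fun x => a <= x <= b /\ exists P, fine d a x P).
 assert (HE : exists x, E x) by (exists a; split; [lra| exists nil; simpl; auto]).
 assert (HB : bound E) by (exists b; intros x [Hx _]; lra).
 destruct (completeness E HB HE) as [s [Hub Hlub]].
 assert (Has : a <= s) by (apply Hub; split; [lra| exists nil; simpl; auto]).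
 assert (Hsb : s <= b) by (apply Hlub; intros x [Hx _]; lra).
 assert (Hx : exists x, E x /\ s - d s < x).
 { apply Classical_Prop.NNPP. intros Hn.
   assert (s <= s - d s). { apply Hlub. intros x Ex. destruct (Rle_dec x (s - d s)); auto.
     exfalso; apply Hn; exists x; split; auto; lra. }
   specialize (Hd s); lra. }
 destruct Hx as [x [[Hx1 [P HP]] Hx2]].
 assert (Hxs : x <= s) by (apply Hub; split; [lra| exists P; auto]).
 assert (Es : exists P, fine d a s P).
 { destruct (Req_dec x s). subst; exists P; auto.
   exists (P ++ (s, s) :: nil). apply fine_app with x; auto. simpl. specialize (Hd s). repeat split; lra. }
 destruct Es as [Q HQ].
 destruct (Req_dec s b). subst; exists Q; auto.
 exfalso. set (y := Rmin b (s + d s / 2)).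
 assert (s < y) by (unfold y; apply Rmin_glb_lt; specialize (Hd s); lra).
 assert (y <= s + d s / 2) by (unfold y; apply Rmin_r).
 assert (y <= b) by (unfold y; apply Rmin_l).
 assert (y <= s). { apply Hub. split; [lra|]. exists (Q ++ (s, y) :: nil). apply fine_app with s; auto.
   simpl. specialize (Hd s). repeat split; lra. }
 lra.
Qed.

Ltac dec_all := repeat match goal with
   | |- context [Rle_dec ?p ?q] => destruct (Rle_dec p q)
   | H: context [Rle_dec ?p ?q] |- _ => destruct (Rle_dec p q) end.
Definition meas (a b u v : R) := Rmax 0 (Rmin b v - Rmax a u).

Lemma meas_split a x b u v : a <= x <= b -> meas a b u v <= meas a x u v + meas x b u v.
Proof. intros H. unfold meas, Rmax, Rmin. dec_all; lra. Qed.

Lemma rsum_lower f d rho a b P u v m :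
  (forall t, d t <= rho) -> fine d a b P -> (forall t, a <= t <= b -> 0 <= f t) ->
  (forall t, a <= t <= b -> u <= t <= v -> m <= f t) -> 0 <= m ->
  m * meas a b (u + rho) (v - rho) <= rsum f a P.
Proof. intros Hd. revert a. induction P as [|[t x] P IH]; simpl; intros a HP Hf Hm Hm0.
 subst. assert (E0 : meas b b (u + rho) (v - rho) = 0) by (unfold meas, Rmax, Rmin; dec_all; lra). rewrite E0; lra.
 destruct HP as (H1&H2&H3&H4&H5). pose proof (fine_le _ _ _ _ H5).
 assert (IH' : m * meas x b (u + rho) (v - rho) <= rsum f x P).
 { apply IH; auto; intros; [apply Hf | apply Hm]; auto; lra. }
 assert (Hs : meas a b (u + rho) (v - rho) <= meas a x (u + rho) (v - rho) + meas x b (u + rho) (v - rho)) by (apply meas_split; lra).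
 assert (Ht : m * meas a x (u + rho) (v - rho) <= f t * (x - a)).
 { pose proof (Hd t). unfold meas.
   destruct (Rle_dec (Rmin x (v - rho) - Rmax a (u + rho)) 0) as [Hle|Hlt].
   - rewrite Rmax_left by lra. assert (0 <= f t) by (apply Hf; lra). nra.
   - rewrite Rmax_right by lra.
     assert (Rmax a (u+rho) < Rmin x (v-rho)) by lra.
     assert (a <= Rmax a (u+rho)) by apply Rmax_l. assert (u + rho <= Rmax a (u+rho)) by apply Rmax_r.
     assert (Rmin x (v-rho) <= x) by apply Rmin_l. assert (Rmin x (v-rho) <= v - rho) by apply Rmin_r.
     assert (m <= f t) by (apply Hm; lra). nra. }
 nra. Qed.

Module CC.
Import Coquelicot.Coquelicot.

Lemma exp_INR_mult (m : nat) z : exp (INR m * z) = exp z ^ m.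
Proof. induction m. simpl. rewrite Rmult_0_l, exp_0; auto.
 rewrite S_INR. replace ((INR m + 1) * z) with (INR m * z + z) by ring. rewrite exp_plus, IHm. simpl. ring. Qed.

Lemma poly_exp_bound (m : nat) : exists C, 0 < C /\ forall y, 0 < y -> y ^ m * exp (- y) <= C.
Proof. destruct m as [|m]. exists 1; split; [lra|]. intros y Hy. simpl. rewrite Rmult_1_l.
 assert (exp (-y) < exp 0) by (apply exp_increasing; lra). rewrite exp_0 in H; lra.
 set (M := INR (S m)). assert (HM : 0 < M) by (apply lt_0_INR; lia).
 exists (M ^ (S m)); split. apply pow_lt; auto. intros y Hy.
 assert (E : exp y = exp (y / M) ^ (S m)).
 { rewrite <- exp_INR_mult. f_equal. fold M. field. lra. }
 assert (H1 : y / M <= exp (y / M)). { assert (0 < y/M) by (apply Rdiv_lt_0_compat; lra).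
     pose proof (exp_ineq1_le (y/M)). lra. }
 assert (H2 : (y / M) ^ (S m) <= exp (y / M) ^ (S m)).
 { apply pow_incr. split; auto. apply Rlt_le, Rdiv_lt_0_compat; lra. }
 rewrite <- E in H2. rewrite exp_Ropp.
 assert (Hp : 0 < exp y) by apply exp_pos.
 replace ((y / M) ^ S m) with (y ^ S m / M ^ S m) in H2 by (unfold Rdiv; rewrite Rpow_mult_distr, pow_inv; auto).
 assert (0 < M ^ S m) by (apply pow_lt; auto).
 apply Rmult_le_reg_r with (exp y); auto. rewrite Rmult_assoc, Rinv_l by lra.
 apply Rmult_le_reg_r with (/ M ^ S m). apply Rinv_0_lt_compat; auto.
 replace (M ^ S m * exp y * / M ^ S m) with (exp y) by (field; lra). lra. Qed.

Lemma inv_pow_exp_bound (a : nat) : exists C, 0 < C /\ forall u, 0 < u -> (/ u) ^ a * exp (- / u) <= C * u ^ 2.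
Proof. destruct (poly_exp_bound (a + 2)) as [C [HC H]]. exists C; split; auto. intros u Hu.
 specialize (H (/ u) (Rinv_0_lt_compat _ Hu)). rewrite pow_add in H.
 assert (E : (/ u) ^ 2 * u ^ 2 = 1) by (rewrite <- Rpow_mult_distr, Rinv_l by lra; apply pow1).
 assert (0 < u ^ 2) by (apply pow_lt; lra).
 replace ((/ u) ^ a * exp (- / u)) with ((/ u) ^ a * (/ u) ^ 2 * exp (- / u) * u ^ 2).
 apply Rmult_le_compat_r; lra.
 transitivity ((/ u) ^ a * exp (- / u) * ((/ u) ^ 2 * u ^ 2)). ring. rewrite E; ring. Qed.

Lemma inv_pow_exp_bound0 (a : nat) : exists C, 0 < C /\ forall u, 0 < u -> (/ u) ^ a * exp (- / u) <= C.
Proof. destruct (poly_exp_bound a) as [C [HC H]]. exists C; split; auto. intros u Hu. apply H. apply Rinv_0_lt_compat; auto. Qed.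

Lemma inv_pow_exp_nonneg a u : 0 <= (/ u) ^ a * exp (- / u) \/ u <= 0.
Proof. destruct (Rle_dec u 0); auto. left. apply Rmult_le_pos. apply pow_le. apply Rlt_le, Rinv_0_lt_compat; lra. apply Rlt_le, exp_pos. Qed.

Definition Gf (c d : R) (a b : nat) (x : R) : R := (/ (x - c)) ^ a * (/ (d - x)) ^ b * exp (- / (x - c) - / (d - x)).
Definition Tf (c d : R) (a b : nat) (x : R) : R :=
  if Rlt_dec c x then if Rlt_dec x d then Gf c d a b x else 0 else 0.
Definition DT (c d : R) (a b : nat) (x : R) : R :=
  - INR a * Tf c d (S a) b x + INR b * Tf c d a (S b) x + Tf c d (S (S a)) b x - Tf c d a (S (S b)) x.

Lemma Tf_out c d a b x : (x <= c \/ d <= x) -> Tf c d a b x = 0.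
Proof. intros H. unfold Tf. destruct (Rlt_dec c x); auto. destruct (Rlt_dec x d); auto. lra. Qed.
Lemma Tf_in c d a b x : c < x < d -> Tf c d a b x = Gf c d a b x.
Proof. intros H. unfold Tf. destruct (Rlt_dec c x); [|lra]. destruct (Rlt_dec x d); auto. lra. Qed.

Lemma Gf_split c d a b x : Gf c d a b x = ((/ (x - c)) ^ a * exp (- / (x - c))) * ((/ (d - x)) ^ b * exp (- / (d - x))).
Proof. unfold Gf. unfold Rminus at 3. rewrite exp_plus. ring. Qed.

Lemma Gf_nonneg c d a b x : c < x < d -> 0 <= Gf c d a b x.
Proof. intros H. rewrite Gf_split. destruct (inv_pow_exp_nonneg a (x - c)); [|lra].
 destruct (inv_pow_exp_nonneg b (d - x)); [|lra]. apply Rmult_le_pos; auto. Qed.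

Lemma absdiv_small X K h eps : 0 <= X -> X <= K * h ^ 2 -> 0 < K -> h <> 0 -> Rabs h * (K + 1) < eps -> Rabs (X / h) < eps.
Proof. intros H1 H2 H3 H4 H5. unfold Rdiv. rewrite Rabs_mult, Rabs_right by lra. rewrite Rabs_inv.
 assert (0 < Rabs h) by (apply Rabs_pos_lt; auto).
 assert (h ^ 2 = Rabs h * Rabs h) by (rewrite <- Rabs_mult; simpl; rewrite Rmult_1_r; rewrite Rabs_right; [ring|]; apply Rle_ge; nra).
 apply Rle_lt_trans with (K * Rabs h); [|nra].
 apply Rmult_le_reg_r with (Rabs h); auto. rewrite Rmult_assoc, Rinv_l by lra. nra. Qed.

Lemma deriv_T c d a b x : c < d -> derivable_pt_lim (Tf c d a b) x (DT c d a b x).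
Proof. intros Hcd.
 destruct (Rlt_dec x c) as [Hxc|Hxc].
 { unfold DT. rewrite !Tf_out by lra.
   apply derivable_pt_lim_locally_ext with (f := fun _ => 0) (a := x - 1) (b := c). lra.
   intros; rewrite Tf_out; auto; lra. replace (- INR a * 0 + INR b * 0 + 0 - 0) with 0 by ring. apply derivable_pt_lim_const. }
 destruct (Rlt_dec d x) as [Hxd|Hxd].
 { unfold DT. rewrite !Tf_out by lra.
   apply derivable_pt_lim_locally_ext with (f := fun _ => 0) (a := d) (b := x + 1). lra.
   intros; rewrite Tf_out; auto; lra. replace (- INR a * 0 + INR b * 0 + 0 - 0) with 0 by ring. apply derivable_pt_lim_const. }
 destruct (Req_dec x c) as [Ex|Ex].
 { subst x. unfold DT. rewrite !Tf_out by lra.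
   replace (- INR a * 0 + INR b * 0 + 0 - 0) with 0 by ring.
   destruct (inv_pow_exp_bound a) as [C1 [HC1 H1]]. destruct (inv_pow_exp_bound0 b) as [C2 [HC2 H2]].
   intros eps Heps. assert (Hd : 0 < eps / (C1 * C2 + 1)) by (apply Rdiv_lt_0_compat; nra).
   exists (mkposreal _ Hd). simpl. intros h Hh0 Hh.
   rewrite (Tf_out c d a b c) by lra. rewrite Rminus_0_r.
   destruct (Rlt_dec 0 h) as [Hp|Hp].
   - destruct (Rlt_dec (c + h) d) as [Hin|Hin].
     + rewrite Tf_in by lra. rewrite Gf_split. replace (c + h - c) with h by ring.
       specialize (H1 h Hp). specialize (H2 (d - (c + h)) ltac:(lra)).
       destruct (inv_pow_exp_nonneg a h) as [N1|]; [|lra]. destruct (inv_pow_exp_nonneg b (d - (c+h))) as [N2|]; [|lra].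
       rewrite Rminus_0_r. rewrite Rabs_right.
       2:{ apply Rle_ge. unfold Rdiv. apply Rmult_le_pos. apply Rmult_le_pos; auto. apply Rlt_le, Rinv_0_lt_compat; auto. }
       rewrite Rabs_right in Hh by lra.
       assert (Hb : (/ h) ^ a * exp (- / h) * ((/ (d - (c + h))) ^ b * exp (- / (d - (c + h)))) <= C1 * h ^ 2 * C2).
       { apply Rmult_le_compat; auto. }
       apply Rle_lt_trans with (C1 * C2 * h).
       { unfold Rdiv. apply Rmult_le_reg_r with h; auto. rewrite Rmult_assoc, Rinv_l by lra. simpl in Hb |- *. nra. }
       assert (h * (C1 * C2 + 1) < eps). { apply Rmult_lt_reg_r with (/ (C1 * C2 + 1)). apply Rinv_0_lt_compat; nra.
         rewrite Rmult_assoc, Rinv_r by nra. lra. }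
       nra.
     + rewrite Tf_out by lra. match goal with |- Rabs ?e < _ => replace e with 0 by (field; lra) end; rewrite Rabs_R0; auto.
   - rewrite Tf_out by lra. match goal with |- Rabs ?e < _ => replace e with 0 by (field; lra) end; rewrite Rabs_R0; auto. }
 destruct (Req_dec x d) as [Ex'|Ex'].
 { subst x. unfold DT. rewrite !Tf_out by lra.
   replace (- INR a * 0 + INR b * 0 + 0 - 0) with 0 by ring.
   destruct (inv_pow_exp_bound b) as [C1 [HC1 H1]]. destruct (inv_pow_exp_bound0 a) as [C2 [HC2 H2]].
   intros eps Heps. assert (Hd : 0 < Rmin (d - c) (eps / (C1 * C2 + 1))) by (apply Rmin_glb_lt; [lra|apply Rdiv_lt_0_compat; nra]).
   exists (mkposreal _ Hd). simpl. intros h Hh0 Hh.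
   pose proof (Rmin_l (d - c) (eps / (C1 * C2 + 1))). pose proof (Rmin_r (d - c) (eps / (C1 * C2 + 1))).
   rewrite (Tf_out c d a b d) by lra. rewrite Rminus_0_r.
   destruct (Rlt_dec h 0) as [Hp|Hp].
   - rewrite Rabs_left in Hh by lra.
     rewrite Tf_in by lra. rewrite Gf_split. replace (d - (d + h)) with (- h) by ring.
     specialize (H1 (- h) ltac:(lra)). specialize (H2 (d + h - c) ltac:(lra)).
     destruct (inv_pow_exp_nonneg b (- h)) as [N1|]; [|lra]. destruct (inv_pow_exp_nonneg a (d + h - c)) as [N2|]; [|lra].
     rewrite Rminus_0_r.
     assert (Hb : (/ (d + h - c)) ^ a * exp (- / (d + h - c)) * ((/ - h) ^ b * exp (- / - h)) <= C2 * (C1 * (- h) ^ 2)).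
     { apply Rmult_le_compat; auto. }
     apply absdiv_small with (C2 * C1). apply Rmult_le_pos; auto.
     replace (h ^ 2) with ((-h)^2) by ring. lra. nra. lra.
     rewrite Rabs_left by lra.
     apply Rmult_lt_reg_r with (/ (C2 * C1 + 1)). apply Rinv_0_lt_compat; nra.
     rewrite Rmult_assoc, Rinv_r by nra. replace (C2 * C1) with (C1 * C2) by ring. lra.
   - rewrite Tf_out by lra. match goal with |- Rabs ?e < _ => replace e with 0 by (field; lra) end; rewrite Rabs_R0; auto. }
 assert (Hin : c < x < d) by lra.
 apply derivable_pt_lim_locally_ext with (f := Gf c d a b) (a := c) (b := d); auto.
 intros; rewrite Tf_in; auto.
 apply is_derive_Reals. unfold DT. rewrite !Tf_in by lra. unfold Gf.
 auto_derive. lra.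
 replace (exp (- / (x - c) - / (d - x))) with (exp (- / (x + - c) + - / (d + - x))) by (f_equal; ring).
 set (E := exp (- / (x + - c) + - / (d + - x))). clearbody E. assert (x - c <> 0) by lra. assert (d - x <> 0) by lra.
 unfold Rminus in *.
 destruct a as [|a]; destruct b as [|b]; simpl pred; rewrite ?S_INR; simpl INR; simpl pow; field; auto.
Qed.

End CC.
Import CC.

Fixpoint ev (c d : R) (l : list (R * nat * nat)) (x : R) : R :=
  match l with nil => 0 | (k, a, b) :: l' => k * Tf c d a b x + ev c d l' x end.
Definition deriv1 (t : R * nat * nat) : list (R * nat * nat) :=
  let '(k, a, b) := t in
  (- INR a * k, S a, b) :: (INR b * k, a, S b) :: (k, S (S a), b) :: (- k, a, S (S b)) :: nil.
Definition dl (l : list (R * nat * nat)) := flat_map deriv1 l.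

Lemma ev_app c d l1 l2 x : ev c d (l1 ++ l2) x = ev c d l1 x + ev c d l2 x.
Proof. induction l1 as [|[[k a] b] l IH]; simpl; [lra|]. rewrite IH; lra. Qed.

Lemma ev_deriv c d l x : c < d -> derivable_pt_lim (ev c d l) x (ev c d (dl l) x).
Proof. intros Hcd. induction l as [|[[k a] b] l IH]; simpl.
 - apply derivable_pt_lim_const.
 - match goal with |- derivable_pt_lim _ x ?e => replace e with (k * DT c d a b x + ev c d (dl l) x) by (unfold DT; ring) end.
   apply derivable_pt_lim_plus; auto.
   apply derivable_pt_lim_scal. apply deriv_T; auto. Qed.

Definition Dseq (c d : R) (k : nat) : R -> R := ev c d (Nat.iter k dl ((1, 0%nat, 0%nat) :: nil)).

Lemma Tf00_bounds c d x : 0 <= Tf c d 0 0 x <= 1.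
Proof. unfold Tf. destruct (Rlt_dec c x); [|lra]. destruct (Rlt_dec x d); [|lra].
 unfold Gf. simpl. rewrite !Rmult_1_l. split. apply Rlt_le, exp_pos.
 rewrite <- exp_0. apply Rlt_le, exp_increasing. assert (0 < / (x - c)) by (apply Rinv_0_lt_compat; lra).
 assert (0 < / (d - x)) by (apply Rinv_0_lt_compat; lra). lra. Qed.

Lemma Tf_bound c d a b : exists C, 0 < C /\ forall x, 0 <= Tf c d a b x <= C.
Proof. destruct (inv_pow_exp_bound0 a) as [C1 [H1 K1]]. destruct (inv_pow_exp_bound0 b) as [C2 [H2 K2]].
 exists (C1 * C2). split. nra. intros x. destruct (Rlt_dec c x); [destruct (Rlt_dec x d)|].
 - rewrite Tf_in by lra. split. apply Gf_nonneg; lra. rewrite Gf_split.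
   destruct (inv_pow_exp_nonneg a (x - c)); [|lra]. destruct (inv_pow_exp_nonneg b (d - x)); [|lra].
   apply Rmult_le_compat; auto; [apply K1 | apply K2]; lra.
 - rewrite Tf_out by lra. nra.
 - rewrite Tf_out by lra. nra. Qed.

Lemma bump (c d : R) : c < d -> exists phi dphi,
  (exists D : nat -> R -> R, D O = phi /\ D 1%nat = dphi /\ forall k x, derivable_pt_lim (D k) x (D (S k) x)) /\
  (forall x, (x <= c \/ d <= x) -> phi x = 0) /\
  (forall x, 0 <= phi x <= 1) /\
  (exists B, forall x, Rabs (dphi x) <= B) /\
  (forall eta x, 0 < eta -> c + eta <= x <= d - eta -> exp (- (2 / eta)) <= phi x).
Proof. intros Hcd. exists (Dseq c d 0), (Dseq c d 1). split; [|split; [|split; [|split]]].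
 - exists (Dseq c d). repeat split. intros k x. unfold Dseq. simpl. apply ev_deriv; auto.
 - intros x Hx. unfold Dseq; simpl. rewrite Tf_out; auto. lra.
 - intros x. unfold Dseq; simpl. pose proof (Tf00_bounds c d x). lra.
 - destruct (Tf_bound c d 2 0) as [C1 [HC1 H1]]. destruct (Tf_bound c d 0 2) as [C2 [HC2 H2]].
   exists (C1 + C2). intros x. unfold Dseq; simpl.
   specialize (H1 x). specialize (H2 x).
   match goal with |- Rabs ?e <= _ => replace e with (Tf c d 2 0 x - Tf c d 0 2 x) by ring end.
   apply Rabs_le. lra.
 - intros eta x Heta Hx. unfold Dseq; simpl. assert (c < x < d) by lra. rewrite Tf_in by auto.
   unfold Gf. simpl. rewrite Rplus_0_r, !Rmult_1_l.
   assert (/ (x - c) <= / eta) by (apply Rinv_le_contravar; lra).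
   assert (/ (d - x) <= / eta) by (apply Rinv_le_contravar; lra).
   destruct (Req_dec (- (2 / eta)) (- / (x - c) - / (d - x))) as [E|E]. rewrite E; lra.
   apply Rlt_le, exp_increasing. unfold Rdiv. lra.
Qed.

Lemma Rdiv_le_0_compat x y : 0 <= x -> 0 < y -> 0 <= x / y.
Proof. intros; apply Rle_mult_inv_pos; auto. Qed.

Lemma Rpower_pos x y : 0 < Rpower x y.
Proof. unfold Rpower. apply exp_pos. Qed.
Lemma rpow_nonneg x y : 0 <= rpow x y.
Proof. unfold rpow. destruct (Rle_dec x 0); [lra|]. apply Rlt_le, Rpower_pos. Qed.
Lemma rpow_pos x y : 0 < x -> rpow x y = Rpower x y.
Proof. intros H. unfold rpow. destruct (Rle_dec x 0); [lra|auto]. Qed.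
Lemma rpow_zero y : rpow 0 y = 0.
Proof. unfold rpow. destruct (Rle_dec 0 0); [auto|lra]. Qed.

Lemma Rpower_split x p : 0 < x -> Rpower x p = Rpower x (p - 1) * x.
Proof. intros H. rewrite <- (Rpower_1 x) at 3 by auto. rewrite <- Rpower_plus. f_equal; ring. Qed.

Lemma young1 x lam p : 0 <= x -> 0 < lam -> 1 <= p -> x <= lam + rpow x p / Rpower lam (p - 1).
Proof. intros Hx Hl Hp. pose proof (Rpower_pos lam (p-1)).
 assert (0 <= rpow x p / Rpower lam (p - 1)) by (apply Rdiv_le_0_compat; auto; apply rpow_nonneg).
 destruct (Rle_dec x lam). lra.
 rewrite rpow_pos by lra. rewrite Rpower_split by lra.
 assert (Rpower lam (p - 1) <= Rpower x (p - 1)) by (apply Rle_Rpower_l; lra).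
 assert (x <= Rpower x (p - 1) * x / Rpower lam (p - 1)).
 { apply Rmult_le_reg_r with (Rpower lam (p - 1)); auto. unfold Rdiv. rewrite Rmult_assoc, Rinv_l by lra. nra. }
 lra. Qed.

Lemma young2 x k p : 0 <= x -> 0 < k -> 2 <= p ->
  rpow x (p - 2) * x <= Rpower k (p - 1) * (1 + rpow x p / Rpower k p).
Proof. intros Hx Hk Hp. pose proof (Rpower_pos k (p-1)). pose proof (Rpower_pos k p).
 assert (0 <= rpow x p / Rpower k p) by (apply Rdiv_le_0_compat; auto; apply rpow_nonneg).
 destruct (Req_dec x 0). subst. rewrite Rmult_0_r. nra.
 rewrite !rpow_pos by lra.
 assert (E : Rpower x (p - 2) * x = Rpower x (p - 1)).
 { rewrite (Rpower_split x (p - 1)) by lra. f_equal. f_equal. ring. }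
 rewrite E. destruct (Rle_dec x k).
 - assert (Rpower x (p - 1) <= Rpower k (p - 1)) by (apply Rle_Rpower_l; lra).
   assert (0 <= Rpower k (p - 1) * (Rpower x p / Rpower k p)) by (apply Rmult_le_pos; [lra| apply Rdiv_le_0_compat; auto; apply Rlt_le, Rpower_pos]).
   nra.
 - rewrite (Rpower_split x p) by lra. rewrite (Rpower_split k p) by lra.
   assert (Rpower x (p - 1) * x / (Rpower k (p - 1) * k) * Rpower k (p - 1) = Rpower x (p - 1) * x / k) by (field; lra).
   assert (Rpower x (p - 1) <= Rpower x (p - 1) * x / k).
   { apply Rmult_le_reg_r with k; auto. unfold Rdiv. rewrite Rmult_assoc, Rinv_l by lra. pose proof (Rpower_pos x (p - 1)). nra. }
   nra. Qed.

Lemma le_eps a b : (forall eps, 0 < eps -> a <= b + eps) -> a <= b.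
Proof. intros H. destruct (Rle_dec a b); auto. specialize (H ((a - b)/2)). lra. Qed.

Definition gmin (d1 d2 : R -> R) := fun t => Rmin (d1 t) (d2 t).
Lemma gmin_pos d1 d2 : (forall t, 0 < d1 t) -> (forall t, 0 < d2 t) -> forall t, 0 < gmin d1 d2 t.
Proof. intros; unfold gmin; apply Rmin_glb_lt; auto. Qed.
Lemma fine_gmin_l d1 d2 a b P : fine (gmin d1 d2) a b P -> fine d1 a b P.
Proof. apply fine_mono. intros; apply Rmin_l. Qed.
Lemma fine_gmin_r d1 d2 a b P : fine (gmin d1 d2) a b P -> fine d2 a b P.
Proof. apply fine_mono. intros; apply Rmin_r. Qed.

Lemma HK_nonneg f a b I : HKint f a b I -> (forall t, a <= t <= b -> 0 <= f t) -> 0 <= I.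
Proof. intros [Hab H] Hf. apply le_eps. intros eps Heps. destruct (H eps Heps) as [d [Hd HP]].
 destruct (cousin d a b Hd Hab) as [P HPf]. specialize (HP P HPf).
 pose proof (rsum_nonneg f d a b P Hf HPf). apply Rabs_def2 in HP. lra. Qed.

Lemma HK_zero f a I : HKint f a a I -> I = 0.
Proof. intros [_ H]. apply Rle_antisym; apply le_eps; intros eps Heps; destruct (H eps Heps) as [d [Hd HP]];
 specialize (HP nil eq_refl); simpl in HP; apply Rabs_def2 in HP; lra. Qed.

Lemma HK_diff_bound f s t Is It lo hi : 0 <= s <= t -> HKint f 0 s Is -> HKint f 0 t It ->
  (forall x, s <= x <= t -> lo <= f x <= hi) -> lo * (t - s) <= It - Is <= hi * (t - s).
Proof. intros Hst [_ H1] [_ H2] Hf. split; apply le_eps; intros eps Heps.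
 all: destruct (H1 (eps/2) ltac:(lra)) as [d1 [Hd1 K1]]; destruct (H2 (eps/2) ltac:(lra)) as [d2 [Hd2 K2]].
 all: pose proof (gmin_pos _ _ Hd1 Hd2) as Hd.
 all: destruct (cousin _ 0 s Hd ltac:(lra)) as [P1 HP1]; destruct (cousin _ s t Hd ltac:(lra)) as [P2 HP2].
 all: specialize (K1 P1 (fine_gmin_l _ _ _ _ _ HP1)).
 all: specialize (K2 (P1 ++ P2) (fine_gmin_r _ _ _ _ _ (fine_app _ _ _ _ _ _ HP1 HP2))).
 all: rewrite (rsum_app f _ 0 s P1 P2 HP1) in K2.
 all: apply Rabs_def2 in K1; apply Rabs_def2 in K2.
 - assert (lo * (t - s) <= rsum f s P2). { rewrite <- (rsum_const lo _ s t P2 HP2). apply rsum_le with (gmin d1 d2) t; auto. intros; apply Hf; auto. }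
   lra.
 - assert (rsum f s P2 <= hi * (t - s)). { rewrite <- (rsum_const hi _ s t P2 HP2). apply rsum_le with (gmin d1 d2) t; auto. intros; apply Hf; auto. }
   lra. Qed.

Lemma lipschitz_cont f C : 0 < C -> (forall x y, Rabs (f x - f y) <= C * Rabs (x - y)) -> continuity f.
Proof. intros HC H x eps Heps. exists (eps / C). split. apply Rdiv_lt_0_compat; lra.
 intros y [_ Hy]. simpl in *. unfold Rdist in *. eapply Rle_lt_trans. apply H.
 apply Rmult_lt_reg_r with (/ C). apply Rinv_0_lt_compat; lra.
 replace (C * Rabs (y - x) * / C) with (Rabs (y - x)) by (field; lra). auto. Qed.

Definition clamp (a b x : R) := Rmax a (Rmin b x).

Lemma beta_facts (ell : R) (alpha psi beta : R -> R) (L : R) :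
  0 < ell -> (forall s, 0 <= s <= ell -> 0 < alpha s) -> bounded_variation alpha 0 ell ->
  (exists C, forall s, 0 <= s <= ell -> / alpha s <= C) ->
  (forall s, 0 <= s <= ell -> HKint (fun sigma => / alpha sigma) 0 s (psi s)) ->
  L = psi ell -> (forall s, 0 <= s <= ell -> beta (psi s) = alpha s) ->
  0 < L /\ exists cb Bb, 0 < cb /\ forall t, 0 <= t <= L -> cb <= beta t <= Bb.
Proof. intros Hell Hpos [M HM] [C HC] Hpsi HL Hbeta.
 assert (HC0 : 0 < C). { specialize (Hpos 0 ltac:(lra)). specialize (HC 0 ltac:(lra)). pose proof (Rinv_0_lt_compat _ Hpos). lra. }
 set (A := alpha 0 + M).
 assert (HA : forall s, 0 <= s <= ell -> alpha s <= A).
 { intros s Hs. specialize (HM (fun i => match i with O => 0 | _ => s end) 1%nat).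
   simpl in HM. assert (H : 0 + Rabs (alpha s - alpha 0) <= M). { apply HM; intros i Hi.
     destruct i; [lra|]. destruct i; [lra|lia]. destruct i; [lra|lia]. }
   pose proof (Rle_abs (alpha s - alpha 0)). unfold A; lra. }
 assert (HA0 : 0 < A) by (pose proof (HA 0 ltac:(lra)); pose proof (Hpos 0 ltac:(lra)); lra).
 assert (Hdiff : forall s s', 0 <= s <= s' -> s' <= ell -> / A * (s' - s) <= psi s' - psi s <= C * (s' - s)).
 { intros s s' H1 H2. apply HK_diff_bound with (f := fun sigma => / alpha sigma); auto.
   apply Hpsi; lra. apply Hpsi; lra. intros x Hx. split. apply Rinv_le_contravar. apply Hpos; lra. apply HA; lra. apply HC; lra. }
 assert (Hpsi0 : psi 0 = 0) by (apply HK_zero with (f := fun sigma => / alpha sigma) (a := 0); apply Hpsi; lra).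
 assert (HL0 : 0 < L). { subst L. specialize (Hdiff 0 ell ltac:(lra) ltac:(lra)). rewrite Hpsi0 in Hdiff.
   pose proof (Rinv_0_lt_compat _ HA0). nra. }
 split; auto.
 assert (HCinv : forall s, 0 <= s <= ell -> / C <= alpha s).
 { intros s Hs. specialize (HC s Hs). specialize (Hpos s Hs). rewrite <- (Rinv_inv (alpha s)). apply Rinv_le_contravar; auto.
   apply Rinv_0_lt_compat; auto. }
 exists (/ C), A. split. apply Rinv_0_lt_compat; auto.
 intros t Ht.
 set (h := fun x => psi (clamp 0 ell x) - t).
 assert (Hcl : forall x, 0 <= clamp 0 ell x <= ell).
 { intros x. unfold clamp, Rmax, Rmin. dec_all; lra. }
 assert (Hclip : forall x y, Rabs (clamp 0 ell x - clamp 0 ell y) <= Rabs (x - y)).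
 { intros x y. unfold clamp, Rmax, Rmin. dec_all; unfold Rabs; repeat match goal with |- context [Rcase_abs ?e] => destruct (Rcase_abs e) end; lra. }
 assert (Hcont : continuity h).
 { apply lipschitz_cont with C; auto. intros x y. unfold h.
   replace (psi (clamp 0 ell x) - t - (psi (clamp 0 ell y) - t)) with (psi (clamp 0 ell x) - psi (clamp 0 ell y)) by ring.
   pose proof (Hcl x). pose proof (Hcl y). specialize (Hclip x y).
   destruct (Rle_dec (clamp 0 ell x) (clamp 0 ell y)).
   - pose proof (Hdiff (clamp 0 ell x) (clamp 0 ell y) ltac:(lra) ltac:(lra)).
     pose proof (Rinv_0_lt_compat _ HA0).
     rewrite Rabs_left1 by nra. rewrite Rabs_left1 in Hclip by lra. nra.
   - pose proof (Hdiff (clamp 0 ell y) (clamp 0 ell x) ltac:(lra) ltac:(lra)).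
     pose proof (Rinv_0_lt_compat _ HA0).
     rewrite Rabs_right by nra. rewrite Rabs_right in Hclip by lra. nra. }
 assert (Hc0 : clamp 0 ell 0 = 0) by (unfold clamp, Rmax, Rmin; dec_all; lra).
 assert (Hce : clamp 0 ell ell = ell) by (unfold clamp, Rmax, Rmin; dec_all; lra).
 destruct (IVT_cor h 0 ell Hcont ltac:(lra)) as [z [Hz Ez]].
 { unfold h. rewrite Hc0, Hce, Hpsi0, <- HL. nra. }
 unfold h in Ez. assert (Hcz : clamp 0 ell z = z) by (unfold clamp, Rmax, Rmin; dec_all; lra).
 rewrite Hcz in Ez. replace t with (psi z) by lra. rewrite Hbeta by lra. split; [apply HCinv | apply HA]; lra.
Qed.

Lemma fsum3 n (a b c : R) f g h : fsum n (fun i => a * f i + b * g i + c * h i) = a * fsum n f + b * fsum n g + c * fsum n h.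
Proof. rewrite !fsum_plus, !fsum_scal. ring. Qed.

Lemma dot_sym n u v : dot n u v = dot n v u.
Proof. unfold dot; apply fsum_ext; intros; ring. Qed.

Lemma dot_zero n u v : dot n v v = 0 -> dot n u v = 0.
Proof. intros H. assert (Hv : forall i, (i < n)%nat -> v i = 0).
 { intros i Hi. pose proof (fsum_term_le n (fun i => v i * v i) i ltac:(intros; nra) Hi). unfold dot in H. nra. }
 unfold dot. replace 0 with (fsum n (fun _ => 0)). apply fsum_ext. intros i Hi; rewrite Hv; auto; ring.
 clear. induction n; simpl; auto. rewrite IHn; ring. Qed.

Lemma cauchy_schwarz n u v : dot n u v * dot n u v <= dot n u u * dot n v v.
Proof. destruct (Req_dec (dot n v v) 0) as [H|H].
 rewrite (dot_zero n u v H), H. lra.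
 pose proof (dot_nonneg n v). set (l := dot n u v / dot n v v).
 assert (0 <= fsum n (fun i => (u i - l * v i) * (u i - l * v i))) by (apply fsum_nonneg; intros i0 _; pose proof (Rle_0_sqr (u i0 - l * v i0)); unfold Rsqr in *; lra).
 rewrite (fsum_ext n _ (fun i => 1 * (u i * u i) + (- 2 * l) * (u i * v i) + (l * l) * (v i * v i))) in H1 by (intros; ring).
 rewrite fsum3 in H1. fold (dot n u u) (dot n u v) (dot n v v) in H1.
 unfold l in H1. assert (0 < dot n v v) by lra.
 assert (E : 1 * dot n u u + - 2 * (dot n u v / dot n v v) * dot n u v + dot n u v / dot n v v * (dot n u v / dot n v v) * dot n v v
   = (dot n u u * dot n v v - dot n u v * dot n u v) / dot n v v) by (field; lra).
 rewrite E in H1. apply Rmult_le_compat_r with (r := dot n v v) in H1; [|lra].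
 unfold Rdiv in H1. rewrite Rmult_0_l, Rmult_assoc, Rinv_l in H1 by lra. lra. Qed.

Lemma dot_unit n u : vnorm n u = 1 -> dot n u u = 1.
Proof. unfold vnorm. intros H. pose proof (dot_nonneg n u). rewrite <- (sqrt_sqrt (dot n u u)) by auto. rewrite H; ring. Qed.

Lemma dot_abs_le1 n u v : dot n u u = 1 -> dot n v v = 1 -> Rabs (dot n u v) <= 1.
Proof. intros H1 H2. pose proof (cauchy_schwarz n u v). rewrite H1, H2 in H. apply Rabs_le. nra. Qed.

Lemma dot_lin_r n u (a b : R) v w : dot n u (fun i => a * v i + b * w i) = a * dot n u v + b * dot n u w.
Proof. unfold dot. rewrite <- !fsum_scal, <- fsum_plus. apply fsum_ext; intros; ring. Qed.

Lemma dot_diff_abs n e a b : dot n e e = 1 -> Rabs (dot n e a - dot n e b) <= fsum n (fun i => Rabs (a i - b i)).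
Proof. intros He. replace (dot n e a - dot n e b) with (dot n e (fun i => 1 * a i + (-1) * b i)) by (rewrite dot_lin_r; ring).
 unfold dot. eapply Rle_trans. apply fsum_abs. apply fsum_le. intros i Hi.
 rewrite Rabs_mult. assert (Rabs (e i) <= 1).
 { pose proof (fsum_term_le n (fun i => e i * e i) i ltac:(intros; nra) Hi). unfold dot in He.
   apply Rabs_le. nra. }
 replace (1 * a i + -1 * b i) with (a i - b i) by ring. pose proof (Rabs_pos (a i - b i)). nra. Qed.

Lemma osc n p L tau g I i s t lam : 2 <= p -> primitive_of n L tau g ->
  HKint (fun t => rpow (vnorm n (g t)) p) 0 L I -> (i < n)%nat -> 0 <= s <= t -> t <= L -> 0 < lam ->
  Rabs (tau t i - tau s i) <= lam * (t - s) + I / Rpower lam (p - 1).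
Proof. intros Hp Hprim [_ HI] Hi Hst HtL Hlam.
 destruct (Hprim i Hi s ltac:(lra)) as [_ H1]. destruct (Hprim i Hi t ltac:(lra)) as [_ H2].
 pose proof (Rpower_pos lam (p - 1)) as Hlp.
 apply le_eps. intros eps Heps. set (e := eps / (3 + / Rpower lam (p - 1))).
 assert (He : 0 < e). { unfold e. apply Rdiv_lt_0_compat; auto. pose proof (Rinv_0_lt_compat _ Hlp). lra. }
 destruct (H1 e He) as [d1 [Hd1 K1]]; destruct (H2 e He) as [d2 [Hd2 K2]]; destruct (HI e He) as [d3 [Hd3 K3]].
 set (d := gmin d1 (gmin d2 d3)).
 assert (Hd : forall x, 0 < d x) by (apply gmin_pos; auto; apply gmin_pos; auto).
 destruct (cousin d 0 s Hd ltac:(lra)) as [P1 HP1]; destruct (cousin d s t Hd ltac:(lra)) as [P2 HP2];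
 destruct (cousin d t L Hd ltac:(lra)) as [P3 HP3].
 pose proof (fine_app _ _ _ _ _ _ HP1 HP2) as HP12. pose proof (fine_app _ _ _ _ _ _ HP12 HP3) as HP123.
 specialize (K1 P1 (fine_gmin_l _ _ _ _ _ HP1)).
 specialize (K2 (P1 ++ P2) (fine_gmin_l _ _ _ _ _ (fine_gmin_r _ _ _ _ _ HP12))).
 specialize (K3 ((P1 ++ P2) ++ P3) (fine_gmin_r _ _ _ _ _ (fine_gmin_r _ _ _ _ _ HP123))).
 rewrite (rsum_app _ _ 0 s P1 P2 HP1) in K2.
 set (G := fun x => rpow (vnorm n (g x)) p) in *.
 rewrite (rsum_app G _ 0 t (P1 ++ P2) P3 HP12), (rsum_app G _ 0 s P1 P2 HP1) in K3.
 assert (N1 : 0 <= rsum G 0 P1) by (apply rsum_nonneg with d s; auto; intros; apply rpow_nonneg).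
 assert (N3 : 0 <= rsum G t P3) by (apply rsum_nonneg with d L; auto; intros; apply rpow_nonneg).
 apply Rabs_def2 in K1. apply Rabs_def2 in K2. apply Rabs_def2 in K3.
 assert (B1 : Rabs (rsum (fun x => g x i) s P2) <= lam * (t - s) + rsum G s P2 / Rpower lam (p - 1)).
 { eapply Rle_trans. apply rsum_abs with d t; auto.
   eapply Rle_trans. apply rsum_le with (g := fun x => lam + G x / Rpower lam (p - 1)) (d := d) (b := t); auto.
   intros x _. eapply Rle_trans. apply (comp_le_vnorm n); auto. unfold G; apply young1; auto. apply vnorm_nonneg. lra.
   rewrite rsum_plus, (rsum_const lam d s t P2 HP2). unfold Rdiv. rewrite (rsum_ext _ (fun x => / Rpower lam (p - 1) * G x)) by (intros; ring).
   rewrite rsum_scal. lra. }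
 assert (B2 : rsum G s P2 / Rpower lam (p - 1) <= (I + e) / Rpower lam (p - 1)).
 { unfold Rdiv. apply Rmult_le_compat_r. apply Rlt_le, Rinv_0_lt_compat; auto. lra. }
 assert (E1 : e * 3 + e * / Rpower lam (p - 1) = eps) by (unfold e; field; pose proof (Rinv_0_lt_compat _ Hlp); lra).
 pose proof (Rle_abs (rsum (fun x => g x i) s P2)) as B1a. pose proof (Rle_abs (- rsum (fun x => g x i) s P2)) as B1b. rewrite Rabs_Ropp in B1b. apply Rabs_le. unfold Rdiv in *. split; nra.
Qed.

Lemma k_facts n p L g I k : 0 < L -> 2 <= p -> HKint (fun t => rpow (vnorm n (g t)) p) 0 L I ->
  k = rpow (I / L) (/ p) -> 0 <= I /\ 0 <= k /\ I = L * rpow k p.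
Proof. intros HL Hp HI Hk. assert (HI0 : 0 <= I) by (apply HK_nonneg with (1 := HI); intros; apply rpow_nonneg).
 split; auto. destruct (Req_dec I 0) as [E|E].
 - subst. unfold Rdiv. rewrite Rmult_0_l, !rpow_zero. lra.
 - assert (0 < I / L) by (apply Rdiv_lt_0_compat; lra). rewrite rpow_pos in Hk by auto.
   pose proof (Rpower_pos (I / L) (/ p)). split. lra.
   rewrite rpow_pos by lra. rewrite Hk, Rpower_mult. replace (/ p * p) with 1 by (field; lra).
   rewrite Rpower_1 by auto. field. lra. Qed.

Lemma Rpower2_bound p : 1 <= p -> / Rpower 2 (p - 1) <= 2 / p.
Proof. intros Hp. unfold Rpower. pose proof (exp_ineq1_le ((p - 1) * ln 2)). pose proof ln_lt_2.
 assert (p / 2 <= exp ((p - 1) * ln 2)) by nra.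
 replace (2 / p) with (/ (p / 2)) by (field; lra). apply Rinv_le_contravar; auto. lra. Qed.

Lemma modulus n p L tau g I k i s t : 0 < L -> 2 <= p -> primitive_of n L tau g ->
  HKint (fun t => rpow (vnorm n (g t)) p) 0 L I -> k = rpow (I / L) (/ p) -> (i < n)%nat ->
  0 <= s <= L -> 0 <= t <= L ->
  Rabs (tau t i - tau s i) <= 2 * k * Rabs (t - s) + L * k / Rpower 2 (p - 1).
Proof. intros HL Hp Hprim HI Hk Hi Hs Ht. destruct (k_facts n p L g I k HL Hp HI Hk) as (HI0 & Hk0 & EI).
 assert (Gen : forall s t, 0 <= s <= t -> t <= L -> Rabs (tau t i - tau s i) <= 2 * k * (t - s) + L * k / Rpower 2 (p - 1)).
 { clear s t Hs Ht. intros s t Hst HtL. destruct (Req_dec k 0) as [Ek|Ek].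
   - rewrite Ek, rpow_zero in EI. rewrite Ek. apply le_eps. intros eps Heps.
     destruct (Req_dec s t) as [Est|Est]. subst. unfold Rminus. rewrite Rplus_opp_r, Rabs_R0. unfold Rdiv. nra.
     pose proof (osc n p L tau g I i s t (eps / (t - s)) Hp Hprim HI Hi Hst HtL ltac:(apply Rdiv_lt_0_compat; lra)).
     rewrite EI in H. replace (eps / (t - s) * (t - s)) with eps in H by (field; lra). unfold Rdiv in *. lra.
   - assert (Hkp : 0 < k) by lra.
     pose proof (osc n p L tau g I i s t (2 * k) Hp Hprim HI Hi Hst HtL ltac:(lra)).
     rewrite EI, rpow_pos in H by auto.
     replace (L * Rpower k p / Rpower (2 * k) (p - 1)) with (L * k / Rpower 2 (p - 1)) in H; auto.
     rewrite <- Rpower_mult_distr by lra. rewrite (Rpower_split k p) by auto.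
     pose proof (Rpower_pos 2 (p - 1)). pose proof (Rpower_pos k (p - 1)). field. lra. }
 destruct (Rle_dec s t).
 - rewrite (Rabs_right (t - s)) by lra. apply Gen; lra.
 - rewrite (Rabs_left (t - s)) by lra. rewrite <- Rabs_Ropp. replace (- (tau t i - tau s i)) with (tau s i - tau t i) by ring.
   replace (- (t - s)) with (s - t) by ring. apply Gen; lra. Qed.

Lemma gauge_finite (n : nat) (a b : R) (Q : nat -> list (R * R) -> Prop) :
  (forall i, (i < n)%nat -> exists d, (forall t, 0 < d t) /\ forall P, fine d a b P -> Q i P) ->
  exists d, (forall t, 0 < d t) /\ forall P, fine d a b P -> forall i, (i < n)%nat -> Q i P.
Proof. induction n; intros H.
 - exists (fun _ => 1). split. intros; lra. intros; lia.
 - destruct IHn as [d1 [Hd1 K1]]. intros; apply H; lia.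
   destruct (H n ltac:(lia)) as [d2 [Hd2 K2]].
   exists (gmin d1 d2). split. apply gmin_pos; auto. intros P HP i Hi.
   destruct (Nat.eq_dec i n). subst. apply K2. eapply fine_gmin_r; eauto.
   apply K1. eapply fine_gmin_l; eauto. lia. Qed.

Definition unitv (n : nat) (Lam : vec) : vec := fun i => Lam i / vnorm n Lam.

Lemma unitv_dot n Lam : 0 < vnorm n Lam -> dot n (unitv n Lam) (unitv n Lam) = 1.
Proof. intros H. unfold dot, unitv. rewrite (fsum_ext n _ (fun i => / (vnorm n Lam * vnorm n Lam) * (Lam i * Lam i))) by (intros; field; lra).
 rewrite fsum_scal. fold (dot n Lam Lam). unfold vnorm in *. rewrite sqrt_sqrt by apply dot_nonneg.
 field. intro E. rewrite E, sqrt_0 in H. lra. Qed.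

Lemma unitv_scale n Lam v : 0 < vnorm n Lam -> dot n Lam v = vnorm n Lam * dot n (unitv n Lam) v.
Proof. intros H. unfold dot, unitv. rewrite <- fsum_scal. apply fsum_ext. intros; field; lra. Qed.

Lemma abs_unitv n Lam i : 0 < vnorm n Lam -> (i < n)%nat -> Rabs (unitv n Lam i) <= 1.
Proof. intros H Hi. unfold unitv. unfold Rdiv. rewrite Rabs_mult, Rabs_inv, (Rabs_right (vnorm n Lam)) by lra.
 pose proof (comp_le_vnorm n Lam i Hi). apply Rmult_le_reg_r with (vnorm n Lam); auto.
 rewrite Rmult_assoc, Rinv_l by lra. lra. Qed.

Lemma lam_est n p L tau g I k Lam mu tau0 beta phi dphi B Bb K :
  0 < L -> 2 <= p ->
  (forall t, 0 <= t <= L -> vnorm n (tau t) = 1) -> (forall t, 0 <= t <= L -> vnorm n (tau0 t) = 1) ->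
  HKint (fun t => rpow (vnorm n (g t)) p) 0 L I -> k = rpow (I / L) (/ p) -> 0 < k -> k <= K ->
  weak_eq n L
       (fun t i => rpow (vnorm n (g t)) (p - 2) * g t i)
       (fun t i => rpow (vnorm n (g t)) p * tau t i)
       (fun t i => rpow k (p - 1) * beta t *
          (Lam i - dot n Lam (tau t) * tau t i
           - mu * tau0 t i + mu * dot n (tau0 t) (tau t) * tau t i)) ->
  test_fun 0 L phi dphi -> (forall x, 0 <= phi x <= 1) -> (forall x, Rabs (dphi x) <= B) ->
  (forall t, 0 <= t <= L -> 0 <= beta t <= Bb) -> 0 <= mu -> 0 < vnorm n Lam ->
  exists d, (forall t, 0 < d t) /\ forall P, fine d 0 L P ->
    vnorm n Lam * rsum (fun t => beta t * phi t * (1 - dot n (unitv n Lam) (tau t) * dot n (unitv n Lam) (tau t))) 0 P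
    <= INR n * (B * (2 * L + 1) + (L + 1) * K + 1) + 2 * mu * Bb * L.
Proof. intros HL Hp Htau Htau0 HI Hk Hk0 HkK Heq Htest Hphi HB Hbeta Hmu HLam.
 destruct (k_facts n p L g I k HL Hp HI Hk) as (HI0 & _ & EI).
 set (kp1 := Rpower k (p - 1)). set (kp := Rpower k p).
 assert (Hkp1 : 0 < kp1) by apply Rpower_pos. assert (Hkp : 0 < kp) by apply Rpower_pos.
 assert (Ekp : kp = kp1 * k) by (unfold kp, kp1; apply Rpower_split; auto).
 rewrite rpow_pos in EI by auto. fold kp in EI.
 rewrite rpow_pos in Heq by auto. fold kp1 in Heq.
 set (e := unitv n Lam). set (nL := vnorm n Lam).
 set (V := fun t i => rpow (vnorm n (g t)) (p - 2) * g t i).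
 set (A := fun t i => rpow (vnorm n (g t)) p * tau t i).
 set (F := fun t i => kp1 * beta t * (Lam i - dot n Lam (tau t) * tau t i - mu * tau0 t i + mu * dot n (tau0 t) (tau t) * tau t i)).
 set (Gp := fun t => rpow (vnorm n (g t)) p).
 destruct (gauge_finite n 0 L (fun i P => Rabs (rsum (fun t => - V t i * dphi t + (A t i - F t i) * phi t) 0 P - 0) < kp1)) as [d1 [Hd1 K1]].
 { intros i Hi. destruct (Heq i Hi phi dphi Htest) as [_ H]. apply H; auto. }
 destruct HI as [_ HI]. destruct (HI kp Hkp) as [d2 [Hd2 K2]].
 exists (gmin d1 d2). split. apply gmin_pos; auto. intros P HP.
 specialize (K1 P (fine_gmin_l _ _ _ _ _ HP)). specialize (K2 P (fine_gmin_r _ _ _ _ _ HP)).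
 fold Gp in K2. apply Rabs_def2 in K2.
 assert (HPG : 0 <= rsum Gp 0 P) by (apply rsum_nonneg with (gmin d1 d2) L; auto; intros; apply rpow_nonneg).
 assert (BV : forall i, (i < n)%nat -> Rabs (rsum (fun t => V t i * dphi t) 0 P) <= B * (kp1 * (2 * L + 1))).
 { intros i Hi. eapply Rle_trans. apply rsum_abs with (gmin d1 d2) L; auto.
   eapply Rle_trans. apply rsum_le with (g := fun t => B * (kp1 * (1 + Gp t / kp))) (d := gmin d1 d2) (b := L); auto.
   intros t _. unfold V. rewrite Rabs_mult, Rmult_comm. apply Rmult_le_compat; try apply Rabs_pos; [apply HB|].
   rewrite Rabs_mult, (Rabs_right (rpow _ _)) by (apply Rle_ge, rpow_nonneg).
   eapply Rle_trans. 2: apply young2; auto; apply vnorm_nonneg.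
   apply Rmult_le_compat_l. apply rpow_nonneg. apply (comp_le_vnorm n); auto.
   rewrite rsum_scal, rsum_scal, rsum_plus, (rsum_const 1 _ 0 L P HP).
   unfold Rdiv. rewrite (rsum_ext _ (fun t => / kp * Gp t)) by (intros; ring). rewrite rsum_scal.
   assert (B0 : 0 <= B) by (pose proof (HB 0); pose proof (Rabs_pos (dphi 0)); lra).
   apply Rmult_le_compat_l; auto. apply Rmult_le_compat_l; [lra|].
   assert (/ kp * rsum Gp 0 P <= L + 1). { apply Rmult_le_reg_l with kp; auto. rewrite <- Rmult_assoc, Rinv_r by lra. nra. }
   lra. }
 assert (BA : forall i, (i < n)%nat -> Rabs (rsum (fun t => A t i * phi t) 0 P) <= kp1 * ((L + 1) * K)).
 { intros i Hi. eapply Rle_trans. apply rsum_abs with (gmin d1 d2) L; auto.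
   eapply Rle_trans. apply rsum_le with (g := Gp) (d := gmin d1 d2) (b := L); auto.
   intros t Ht. unfold A, Gp. rewrite !Rabs_mult, (Rabs_right (rpow _ _)) by (apply Rle_ge, rpow_nonneg).
   pose proof (comp_le_vnorm n (tau t) i Hi). rewrite Htau in H by auto. pose proof (rpow_nonneg (vnorm n (g t)) p).
   specialize (Hphi t). rewrite (Rabs_right (phi t)) by lra. pose proof (Rabs_pos (tau t i)).
   assert (Rabs (tau t i) * phi t <= 1) by nra. rewrite Rmult_assoc. nra.
   assert (rsum Gp 0 P <= kp * (L + 1)) by nra. rewrite Ekp in H. nra. }
 assert (Dec : forall i, (i < n)%nat -> rsum (fun t => F t i * phi t) 0 P =
     rsum (fun t => A t i * phi t) 0 P - rsum (fun t => V t i * dphi t) 0 P - rsum (fun t => - V t i * dphi t + (A t i - F t i) * phi t) 0 P).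
 { intros i Hi. rewrite (rsum_ext (fun t => - V t i * dphi t + (A t i - F t i) * phi t)
      (fun t => ((-1) * (V t i * dphi t) + A t i * phi t) + (-1) * (F t i * phi t))) by (intros; ring).
   rewrite !rsum_plus, !rsum_scal. ring. }
 set (X := fun t => beta t * phi t * (1 - dot n e (tau t) * dot n e (tau t))).
 set (Y := fun t => beta t * phi t * (dot n e (tau0 t) - dot n (tau0 t) (tau t) * dot n e (tau t))).
 assert (Comb : fsum n (fun i => e i * rsum (fun t => F t i * phi t) 0 P) = kp1 * (nL * rsum X 0 P - mu * rsum Y 0 P)).
 { rewrite (fsum_ext n _ (fun i => rsum (fun t => e i * (F t i * phi t)) 0 P)) by (intros; rewrite rsum_scal; auto).
   rewrite <- rsum_fsum.
   replace (kp1 * (nL * rsum X 0 P - mu * rsum Y 0 P)) with (rsum (fun t => kp1 * (nL * X t - mu * Y t)) 0 P).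
   2: { rewrite (rsum_ext _ (fun t => kp1 * nL * X t + (- kp1 * mu) * Y t)) by (intros; ring). rewrite rsum_plus, !rsum_scal. ring. }
   apply rsum_ext. intros t.
   unfold F, X, Y.
   rewrite (fsum_ext n _ (fun i => (kp1 * beta t * phi t) * (e i * Lam i) + (kp1 * beta t * phi t * (- dot n Lam (tau t) + mu * dot n (tau0 t) (tau t))) * (e i * tau t i) + (kp1 * beta t * phi t * (- mu)) * (e i * tau0 t i))) by (intros; ring).
   rewrite fsum3. fold (dot n e Lam) (dot n e (tau t)) (dot n e (tau0 t)).
   rewrite (unitv_scale n Lam (tau t)) by auto. fold e nL.
   assert (Ee : dot n e Lam = nL). { rewrite dot_sym. unfold e. rewrite (unitv_scale n Lam (unitv n Lam)) by auto.
     rewrite (unitv_dot n Lam HLam). fold nL. ring. }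
   rewrite Ee. ring. }
 assert (Bound : Rabs (fsum n (fun i => e i * rsum (fun t => F t i * phi t) 0 P)) <= INR n * (kp1 * (B * (2 * L + 1) + (L + 1) * K + 1))).
 { eapply Rle_trans. apply fsum_abs. rewrite <- fsum_const. apply fsum_le. intros i Hi.
   rewrite Rabs_mult. pose proof (abs_unitv n Lam i HLam Hi). fold e in H.
   rewrite Dec by auto. specialize (K1 i Hi). rewrite Rminus_0_r in K1.
   specialize (BV i Hi). specialize (BA i Hi).
   set (r := rsum (fun t => A t i * phi t) 0 P - rsum (fun t => V t i * dphi t) 0 P - rsum (fun t => - V t i * dphi t + (A t i - F t i) * phi t) 0 P).
   assert (Rabs r <= kp1 * (B * (2 * L + 1) + (L + 1) * K + 1)).
   { unfold r. eapply Rle_trans. apply Rabs_triang. rewrite Rabs_Ropp. eapply Rle_trans. apply Rplus_le_compat_r. apply Rabs_triang.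
     rewrite Rabs_Ropp. lra. }
   pose proof (Rabs_pos r). pose proof (Rabs_pos (e i)). nra. }
 rewrite Comb in Bound. rewrite Rabs_mult, (Rabs_right kp1) in Bound by lra.
 assert (BY : Rabs (rsum Y 0 P) <= 2 * Bb * L).
 { eapply Rle_trans. apply rsum_abs with (gmin d1 d2) L; auto.
   replace (2 * Bb * L) with (2 * Bb * (L - 0)) by ring.
   rewrite <- (rsum_const (2 * Bb) _ 0 L P HP). apply rsum_le with (gmin d1 d2) L; auto.
   intros t Ht. unfold Y. rewrite !Rabs_mult. specialize (Hbeta t Ht). specialize (Hphi t).
   rewrite (Rabs_right (beta t)), (Rabs_right (phi t)) by lra.
   assert (He1 : dot n e e = 1) by (apply unitv_dot; auto).
   pose proof (dot_unit n (tau t) (Htau t Ht)). pose proof (dot_unit n (tau0 t) (Htau0 t Ht)).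
   pose proof (dot_abs_le1 n e (tau0 t) He1 H0). pose proof (dot_abs_le1 n e (tau t) He1 H).
   pose proof (dot_abs_le1 n (tau0 t) (tau t) H0 H).
   assert (Rabs (dot n e (tau0 t) - dot n (tau0 t) (tau t) * dot n e (tau t)) <= 2).
   { eapply Rle_trans. apply Rabs_triang. rewrite Rabs_Ropp, Rabs_mult.
     pose proof (Rabs_pos (dot n (tau0 t) (tau t))). pose proof (Rabs_pos (dot n e (tau t))). nra. }
   set (z := Rabs (dot n e (tau0 t) - dot n (tau0 t) (tau t) * dot n e (tau t))) in *.
   pose proof (Rabs_pos (dot n e (tau0 t) - dot n (tau0 t) (tau t) * dot n e (tau t))). fold z in H5.
   assert (phi t * z <= 2) by nra. assert (0 <= phi t * z) by nra. rewrite Rmult_assoc. nra. }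
 assert (nL * rsum X 0 P - mu * rsum Y 0 P <= INR n * (B * (2 * L + 1) + (L + 1) * K + 1)).
 { apply Rmult_le_reg_l with kp1; auto. pose proof (Rle_abs (nL * rsum X 0 P - mu * rsum Y 0 P)). nra. }
 pose proof (Rle_abs (rsum Y 0 P)). pose proof (Rle_abs (- rsum Y 0 P)). rewrite Rabs_Ropp in H1.
 fold X. nra.
Qed.

Lemma sign_chain (sg : R -> R) a b r : 0 < r -> a <= b -> (forall t, a <= t <= b -> / 2 < Rabs (sg t)) ->
  (forall t s, a <= t <= b -> a <= s <= b -> Rabs (t - s) <= r -> Rabs (sg t - sg s) < 1) ->
  forall t, a <= t <= b -> 0 < sg t * sg a.
Proof. intros Hr Hab H1 H2.
 assert (Same : forall t s, a <= t <= b -> a <= s <= b -> Rabs (t - s) <= r -> 0 < sg t * sg s).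
 { intros t s Ht Hs Hts. specialize (H2 t s Ht Hs Hts). pose proof (H1 t Ht). pose proof (H1 s Hs).
   revert H2 H H0. unfold Rabs. repeat match goal with |- context [Rcase_abs ?e] => destruct (Rcase_abs e) end; intros; nra. }
 assert (Ind : forall N : nat, forall t, a <= t <= b -> t <= a + INR N * r -> 0 < sg t * sg a).
 { induction N; intros t Ht Htn.
   - simpl in Htn. replace t with a by lra. apply Same; try lra. rewrite Rminus_diag, Rabs_R0; lra.
   - rewrite S_INR, Rmult_plus_distr_r, Rmult_1_l in Htn. destruct (Rle_dec t (a + INR N * r)). apply IHN; auto.
     assert (0 <= INR N * r) by (pose proof (pos_INR N); nra). set (t' := Rmax a (t - r)).
     assert (Q1 : a <= t' <= t) by (unfold t', Rmax; dec_all; lra).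
     assert (Q2 : t' <= a + INR N * r) by (unfold t', Rmax; dec_all; lra).
     assert (Q3 : Rabs (t - t') <= r) by (unfold t', Rmax; dec_all; rewrite Rabs_right; lra).
     pose proof (IHN t' ltac:(lra) Q2) as Q4. pose proof (Same t t' Ht ltac:(lra) Q3) as Q5.
     pose proof (H1 t' ltac:(lra)) as Q6. assert (Q7 : 0 < sg t' * sg t') by (unfold Rabs in Q6; destruct (Rcase_abs (sg t')); nra).
     assert (Q8 : 0 < (sg t * sg t') * (sg t' * sg a)) by (apply Rmult_lt_0_compat; auto).
     replace ((sg t * sg t') * (sg t' * sg a)) with ((sg t * sg a) * (sg t' * sg t')) in Q8 by ring.
     destruct (Rlt_dec 0 (sg t * sg a)); auto. nra. }
 intros t Ht. destruct (INR_unbounded ((b - a) / r)) as [N HN].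
 apply (Ind N); auto. apply Rmult_gt_compat_r with (r := r) in HN; auto.
 unfold Rdiv in HN. rewrite Rmult_assoc, Rinv_l in HN by lra. lra. Qed.

Lemma bw1 (u : nat -> R) : (forall j, Rabs (u j) <= 1) ->
  exists (f : nat -> nat) (l : R), (forall j, (f j < f (S j))%nat) /\ (forall j, Rabs (u (f j) - l) < / INR (S j)).
Proof. intros Hu. destruct (Bolzano_Weierstrass u (fun c => -1 <= c <= 1) (compact_P3 (-1) 1)) as [l Hl].
 { intros j. specialize (Hu j). pose proof (Rle_abs (u j)). pose proof (Rle_abs (- u j)). rewrite Rabs_Ropp in *. lra. }
 assert (Hpick : forall N m : nat, exists q : nat, (N <= q)%nat /\ Rabs (u q - l) < / INR (S m)).
 { intros N m. assert (Hpos : 0 < / INR (S m)) by (apply Rinv_0_lt_compat, lt_0_INR; lia).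
   destruct (Hl (fun x => Rabs (x - l) < / INR (S m)) N) as [q [Hq1 Hq2]].
   { exists (mkposreal _ Hpos). intros y Hy. unfold disc in Hy. simpl in Hy. auto. }
   exists q; auto. }
 set (pick := fun N m => proj1_sig (constructive_indefinite_description _ (Hpick N m))).
 assert (Hp : forall N m, (N <= pick N m)%nat /\ Rabs (u (pick N m) - l) < / INR (S m)).
 { intros N m. unfold pick. destruct (constructive_indefinite_description _ (Hpick N m)); auto. }
 set (f := fix f (j : nat) : nat := match j with O => pick O O | S j' => pick (S (f j')) (S j') end).
 exists f, l. split.
 - intros j. simpl. destruct (Hp (S (f j)) (S j)). lia.
 - intros j. destruct j; simpl; [apply Hp|]. apply Hp. Qed.

Lemma incr_mono (f : nat -> nat) : (forall j, (f j < f (S j))%nat) -> forall a b, (a < b)%nat -> (f a < f b)%nat.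
Proof. intros H a b Hab. induction Hab. apply H. specialize (H m). lia. Qed.
Lemma incr_ge (f : nat -> nat) : (forall j, (f j < f (S j))%nat) -> forall j, (j <= f j)%nat.
Proof. intros H j. induction j. lia. specialize (H j). lia. Qed.

Lemma bwn (n : nat) (v : nat -> vec) : (forall j i, (i < n)%nat -> Rabs (v j i) <= 1) ->
  exists f : nat -> nat, (forall j, (f j < f (S j))%nat) /\ exists c : vec,
   forall i, (i < n)%nat -> forall eps, 0 < eps -> exists N, forall j, (N <= j)%nat -> Rabs (v (f j) i - c i) < eps.
Proof. intros Hv.
 assert (Gen : forall m, (m <= n)%nat -> exists f : nat -> nat, (forall j, (f j < f (S j))%nat) /\ exists c : vec,
   forall i, (i < m)%nat -> forall eps, 0 < eps -> exists N, forall j, (N <= j)%nat -> Rabs (v (f j) i - c i) < eps).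
 { induction m; intros Hm.
   - exists S. split. intros; lia. exists (fun _ => 0). intros; lia.
   - destruct (IHm ltac:(lia)) as [f [Hf [c Hc]]].
     destruct (bw1 (fun j => v (f j) m)) as [g [l [Hg Hgl]]]. intros; apply Hv; lia.
     exists (fun j => f (g j)). split. intros j. apply incr_mono; auto.
     exists (fun i => if Nat.eq_dec i m then l else c i). intros i Hi eps Heps.
     destruct (Nat.eq_dec i m).
     + subst. destruct (INR_unbounded (/ eps)) as [N HN]. exists N. intros j Hj.
       eapply Rlt_trans. apply Hgl. apply Rle_lt_trans with (/ INR (S N)).
       apply Rinv_le_contravar. apply lt_0_INR; lia. apply le_INR; lia.
       rewrite <- (Rinv_inv eps). apply Rinv_lt_contravar. apply Rmult_lt_0_compat. apply Rinv_0_lt_compat; auto. apply lt_0_INR; lia.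
       rewrite S_INR. lra.
     + destruct (Hc i ltac:(lia) eps Heps) as [N HN]. exists N. intros j Hj. apply HN.
       pose proof (incr_ge g Hg j). lia. }
 apply Gen; lia. Qed.

Lemma nat_finite (n : nat) (Q : nat -> nat -> Prop) :
  (forall i, (i < n)%nat -> exists N, forall j, (N <= j)%nat -> Q i j) ->
  exists N, forall i, (i < n)%nat -> forall j, (N <= j)%nat -> Q i j.
Proof. induction n; intros H. exists O; intros; lia.
 destruct IHn as [N1 K1]. intros; apply H; lia. destruct (H n ltac:(lia)) as [N2 K2].
 exists (Nat.max N1 N2). intros i Hi j Hj. destruct (Nat.eq_dec i n). subst; apply K2; lia. apply K1; lia. Qed.

Lemma final_step n L (tau : R -> R -> vec) (ps : nat -> R) : (0 < n)%nat -> 0 < L ->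
  (forall j, 2 <= ps j) -> (forall M, exists N, forall j, (N <= j)%nat -> M <= ps j) ->
  (forall j t, 0 <= t <= L -> vnorm n (tau (ps j) t) = 1) ->
  (forall eps, 0 < eps -> exists N, forall j, (N <= j)%nat -> forall t s i, 0 <= t <= L -> 0 <= s <= L -> (i < n)%nat ->
      Rabs (tau (ps j) t i - tau (ps j) s i) < eps) ->
  exists ps' : nat -> R,
     (forall j, 2 <= ps' j) /\
     (forall M, exists N, forall j, (N <= j)%nat -> M <= ps' j) /\
     exists c : vec, forall eps, 0 < eps -> exists N, forall j, (N <= j)%nat ->
       forall t, 0 < t < L -> vnorm n (vsub (tau (ps' j) t) c) < eps.
Proof. intros Hn HL Hps2 Hpsinf Hunit Hosc.
 destruct (bwn n (fun j => tau (ps j) (L / 2))) as [f [Hf [c Hc]]].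
 { intros j i Hi. rewrite <- (Hunit j (L / 2)) by lra. apply comp_le_vnorm; auto. }
 exists (fun j => ps (f j)). split; [auto|split].
 - intros M. destruct (Hpsinf M) as [N HN]. exists N. intros j Hj. apply HN. pose proof (incr_ge f Hf j). lia.
 - exists c. intros eps Heps. set (e1 := eps / (2 * INR n + 1)).
   assert (He1 : 0 < e1) by (unfold e1; apply Rdiv_lt_0_compat; [lra|]; pose proof (pos_INR n); lra).
   destruct (Hosc e1 He1) as [N1 K1].
   destruct (nat_finite n (fun i j => Rabs (tau (ps (f j)) (L / 2) i - c i) < e1)) as [N2 K2].
   { intros i Hi. apply Hc; auto. }
   exists (Nat.max N1 N2). intros j Hj t Ht.
   eapply Rle_lt_trans. apply vnorm_le_sum.
   apply Rle_lt_trans with (fsum n (fun _ => 2 * e1)).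
   { apply fsum_le. intros i Hi. unfold vsub.
     replace (tau (ps (f j)) t i - c i) with ((tau (ps (f j)) t i - tau (ps (f j)) (L / 2) i) + (tau (ps (f j)) (L / 2) i - c i)) by ring.
     eapply Rle_trans. apply Rabs_triang.
     assert (Rabs (tau (ps (f j)) t i - tau (ps (f j)) (L / 2) i) < e1).
     { apply K1; try lra. pose proof (incr_ge f Hf j). lia. auto. }
     assert (Rabs (tau (ps (f j)) (L / 2) i - c i) < e1) by (apply K2; auto; lia). lra. }
   rewrite fsum_const. unfold e1.
   assert (0 < INR n) by (apply lt_0_INR; auto).
   apply Rmult_lt_reg_r with (2 * INR n + 1). lra.
   replace (INR n * (2 * (eps / (2 * INR n + 1))) * (2 * INR n + 1)) with (INR n * 2 * eps) by (field; lra).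
   nra. Qed.

Lemma caseB_core (n : nat) (L mu cb Bb Kp : R) (tau0 : R -> vec) (beta : R -> R) :
  (0 < n)%nat -> 0 < L -> 0 < cb -> 0 <= mu -> 0 < Kp ->
  (forall t, 0 <= t <= L -> cb <= beta t <= Bb) -> (forall t, 0 <= t <= L -> vnorm n (tau0 t) = 1) ->
  forall eps, 0 < eps -> exists theta, 0 < theta /\ exists Thr, forall p tau g I k Lam,
   2 <= p -> primitive_of n L tau g -> (forall t, 0 <= t <= L -> vnorm n (tau t) = 1) ->
   HKint (fun t => rpow (vnorm n (g t)) p) 0 L I -> k = rpow (I / L) (/ p) -> 0 < k -> k <= Kp ->
   weak_eq n L
       (fun t i => rpow (vnorm n (g t)) (p - 2) * g t i)
       (fun t i => rpow (vnorm n (g t)) p * tau t i)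
       (fun t i => rpow k (p - 1) * beta t *
          (Lam i - dot n Lam (tau t) * tau t i
           - mu * tau0 t i + mu * dot n (tau0 t) (tau t) * tau t i)) ->
   L * Kp / Rpower 2 (p - 1) <= theta -> Thr < vnorm n Lam ->
   forall t s i, 0 <= t <= L -> 0 <= s <= L -> (i < n)%nat -> Rabs (tau t i - tau s i) < eps.
Proof. intros Hn HL Hcb Hmu HKp Hbeta Htau0 eps Heps.
 assert (Hn' : 0 < INR n) by (apply lt_0_INR; auto). set (n' := INR n) in *.
 set (eta := Rmin (L / 4) (eps / (16 * Kp))).
 assert (Heta : 0 < eta) by (apply Rmin_glb_lt; [lra| apply Rdiv_lt_0_compat; lra]).
 assert (Heta1 : eta <= L / 4) by apply Rmin_l. assert (Heta2 : eta <= eps / (16 * Kp)) by apply Rmin_r.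
 set (d0 := Rmin (1 / 2) (eps * eps / 32)).
 assert (Hd0 : 0 < d0) by (apply Rmin_glb_lt; [lra| apply Rdiv_lt_0_compat; nra]).
 assert (Hd01 : d0 <= 1 / 2) by apply Rmin_l. assert (Hd02 : d0 <= eps * eps / 32) by apply Rmin_r.
 set (r := Rmin (eta / 2) (d0 / (16 * n' * Kp))).
 assert (Hr : 0 < r) by (apply Rmin_glb_lt; [lra| apply Rdiv_lt_0_compat; [lra|]; apply Rmult_lt_0_compat; lra]).
 assert (Hr1 : r <= eta / 2) by apply Rmin_l. assert (Hr2 : r <= d0 / (16 * n' * Kp)) by apply Rmin_r.
 set (th := Rmin (d0 / (16 * n')) (eps / 16)).
 assert (Hth : 0 < th) by (apply Rmin_glb_lt; apply Rdiv_lt_0_compat; lra).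
 assert (Hth1 : th <= d0 / (16 * n')) by apply Rmin_l. assert (Hth2 : th <= eps / 16) by apply Rmin_r.
 destruct (bump (eta / 4) (L - eta / 4) ltac:(lra)) as (phi & dphi & HD & Hsupp & Hphi & [B HB] & Hlow).
 assert (HB0 : 0 <= B) by (pose proof (HB 0); pose proof (Rabs_pos (dphi 0)); lra).
 assert (Htest : test_fun 0 L phi dphi).
 { split; auto. exists (eta / 4), (L - eta / 4). split; [lra|split;[lra|split;[lra|]]]. intros t Ht. apply Hsupp; lra. }
 set (m := exp (- (2 / (eta / 4)))). assert (Hm : 0 < m) by apply exp_pos.
 set (Cst := n' * (B * (2 * L + 1) + (L + 1) * Kp + 1) + 2 * mu * Bb * L).
 assert (HBb : 0 <= Bb) by (pose proof (Hbeta 0 ltac:(lra)); lra).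
 assert (HCst : 0 <= Cst). { unfold Cst. assert (0 <= B*(2*L+1)) by nra. assert (0 <= (L+1)*Kp) by nra.
   assert (0 <= mu * Bb) by nra. assert (0 <= n' * (B * (2 * L + 1) + (L + 1) * Kp + 1)) by nra. nra. }
 set (m' := cb * m * (d0 / 2)). assert (Hm' : 0 < m') by (unfold m'; apply Rmult_lt_0_compat; [nra|lra]).
 exists th; split; auto. exists (Cst / (m' * r)).
 intros p tau g I k Lam Hp Hprim Htau HI Hk Hk0 HkK Heq Hth' HLam t s i Ht Hs Hi.
 assert (HThr : 0 <= Cst / (m' * r)) by (apply Rdiv_le_0_compat; [auto| apply Rmult_lt_0_compat; auto]).
 assert (HnL : 0 < vnorm n Lam) by lra.
 set (e := unitv n Lam). assert (He : dot n e e = 1) by (apply unitv_dot; auto).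
 revert t s i Ht Hs Hi.

 assert (Mod : forall t s i, 0 <= t <= L -> 0 <= s <= L -> (i < n)%nat -> Rabs (tau t i - tau s i) <= 2 * Kp * Rabs (t - s) + th).
 { intros t s i Ht Hs Hi. eapply Rle_trans. apply (modulus n p L tau g I k i s t HL Hp Hprim HI Hk Hi Hs Ht).
   pose proof (Rabs_pos (t - s)).
   assert (L * k / Rpower 2 (p - 1) <= L * Kp / Rpower 2 (p - 1)).
   { unfold Rdiv. apply Rmult_le_compat_r. apply Rlt_le, Rinv_0_lt_compat, Rpower_pos. nra. }
   nra. }
 set (sg := fun t => dot n e (tau t)).
 assert (Hsg1 : forall t, 0 <= t <= L -> Rabs (sg t) <= 1).
 { intros t Ht. apply dot_abs_le1; auto. apply dot_unit; auto. }
 assert (Hsgd : forall t s, 0 <= t <= L -> 0 <= s <= L -> Rabs (sg t - sg s) <= n' * (2 * Kp * Rabs (t - s) + th)).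
 { intros t s Ht Hs. eapply Rle_trans. apply dot_diff_abs; auto. unfold n'. rewrite <- fsum_const.
   apply fsum_le. intros; apply Mod; auto. }
 assert (Hsgr : forall t s, 0 <= t <= L -> 0 <= s <= L -> Rabs (t - s) <= r -> Rabs (sg t - sg s) <= d0 / 4).
 { intros t s Ht Hs Hts. eapply Rle_trans. apply Hsgd; auto.
   assert (2 * Kp * Rabs (t - s) <= 2 * Kp * (d0 / (16 * n' * Kp))) by (apply Rmult_le_compat_l; lra).
   replace (2 * Kp * (d0 / (16 * n' * Kp))) with (d0 / (8 * n')) in H by (field; lra).
   assert (n' * (2 * Kp * Rabs (t - s) + th) <= n' * (d0 / (8 * n') + d0 / (16 * n'))) by (apply Rmult_le_compat_l; lra).
   replace (n' * (d0 / (8 * n') + d0 / (16 * n'))) with (3 * d0 / 16) in H0 by (field; lra). lra. }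
 assert (Step1 : forall t0, eta <= t0 <= L - eta -> 1 - sg t0 * sg t0 < d0).
 { intros t0 Ht0. destruct (Rlt_dec (1 - sg t0 * sg t0) d0) as [|Hc]; auto. exfalso.
   set (f := fun t => beta t * phi t * (1 - sg t * sg t)).
   destruct (lam_est n p L tau g I k Lam mu tau0 beta phi dphi B Bb Kp HL Hp Htau Htau0 HI Hk Hk0 HkK Heq Htest Hphi HB
      ltac:(intros t Ht; pose proof (Hbeta t Ht); lra) Hmu HnL) as [d [Hd Kd]].
   set (dd := gmin d (fun _ => r / 2)).
   assert (Hdd : forall t, 0 < dd t) by (apply gmin_pos; auto; intros; lra).
   destruct (cousin dd 0 L Hdd ltac:(lra)) as [P HP].
   specialize (Kd P (fine_gmin_l _ _ _ _ _ HP)). fold e sg f in Kd.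
   assert (Low : m' * meas 0 L (t0 - r + r / 2) (t0 + r - r / 2) <= rsum f 0 P).
   { apply rsum_lower with dd; auto.
     - intros; apply Rmin_r.
     - intros t Ht. unfold f. pose proof (Hbeta t Ht). pose proof (Hphi t). pose proof (Hsg1 t Ht).
       assert (sg t * sg t <= 1). { pose proof (Rle_abs (sg t)). pose proof (Rle_abs (- sg t)). rewrite Rabs_Ropp in *. nra. }
       apply Rmult_le_pos; nra.
     - intros t Ht Htu. unfold f, m'.
       assert (Rabs (t - t0) <= r) by (apply Rabs_le; lra).
       pose proof (Hsgr t t0 Ht ltac:(lra) H). pose proof (Hsg1 t Ht). pose proof (Hsg1 t0 ltac:(lra)).
       assert (Rabs (sg t * sg t - sg t0 * sg t0) <= d0 / 2).
       { replace (sg t * sg t - sg t0 * sg t0) with ((sg t - sg t0) * (sg t + sg t0)) by ring.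
         rewrite Rabs_mult. pose proof (Rabs_triang (sg t) (sg t0)). pose proof (Rabs_pos (sg t - sg t0)). nra. }
       pose proof (Rle_abs (sg t * sg t - sg t0 * sg t0)).
       assert (Hq : d0 / 2 <= 1 - sg t * sg t) by lra.
       pose proof (Hbeta t Ht). assert (m <= phi t) by (apply Hlow; lra).
       assert (cb * m <= beta t * phi t) by (apply Rmult_le_compat; lra).
       apply Rmult_le_compat; try lra. apply Rmult_le_pos; lra.
     - lra. }
   assert (Em : meas 0 L (t0 - r + r / 2) (t0 + r - r / 2) = r) by (unfold meas, Rmax, Rmin; dec_all; lra).
   rewrite Em in Low.
   assert (Kd' : vnorm n Lam * rsum f 0 P <= Cst) by exact Kd.
   assert (vnorm n Lam * (m' * r) <= vnorm n Lam * rsum f 0 P) by (apply Rmult_le_compat_l; lra).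
   assert (vnorm n Lam <= Cst / (m' * r)).
   { apply Rmult_le_reg_r with (m' * r). apply Rmult_lt_0_compat; auto.
     unfold Rdiv. rewrite Rmult_assoc, Rinv_l by (apply Rgt_not_eq, Rmult_lt_0_compat; auto). lra. }
   lra. }
 assert (Step2 : forall t, eta <= t <= L - eta -> 1 - d0 < Rabs (sg t)).
 { intros t Ht. pose proof (Step1 t Ht). pose proof (Hsg1 t ltac:(lra)).
   assert (sg t * sg t = Rabs (sg t) * Rabs (sg t)) by (rewrite <- Rabs_mult; rewrite Rabs_right; [auto|]; apply Rle_ge; nra).
   pose proof (Rabs_pos (sg t)). nra. }
 assert (Step3 : forall t, eta <= t <= L - eta -> 0 < sg t * sg eta).
 { apply sign_chain with r; auto. lra.
   intros t Ht. pose proof (Step2 t Ht). lra.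
   intros t s0 Ht Hs0 Hts. pose proof (Hsgr t s0 ltac:(lra) ltac:(lra) Hts). lra. }
 set (s0 := if Rlt_dec 0 (sg eta) then 1 else -1).
 assert (Hs0 : s0 * s0 = 1) by (unfold s0; destruct (Rlt_dec 0 (sg eta)); ring).
 assert (Step4a : forall t, eta <= t <= L - eta -> 1 - d0 < s0 * sg t).
 { intros t Ht. pose proof (Step2 t Ht). pose proof (Step3 t Ht). pose proof (Step2 eta ltac:(lra)).
   unfold s0. destruct (Rlt_dec 0 (sg eta)).
   - assert (0 < sg t) by nra. rewrite Rabs_right in H by lra. lra.
   - assert (sg eta < 0). { destruct (Req_dec (sg eta) 0) as [E|E]. rewrite E, Rabs_R0 in H1. lra. lra. }
     assert (sg t < 0) by nra. rewrite Rabs_left in H by lra. lra. }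
 set (c := fun i => s0 * e i).
 assert (Step4 : forall t i, eta <= t <= L - eta -> (i < n)%nat -> Rabs (tau t i - c i) < eps / 4).
 { intros t i Ht Hi. pose proof (Step4a t Ht).
   assert (Hdt : dot n (fun j => tau t j - c j) (fun j => tau t j - c j) < eps * eps / 16).
   { unfold dot. rewrite (fsum_ext n _ (fun j => 1 * (tau t j * tau t j) + (- 2 * s0) * (e j * tau t j) + (s0 * s0) * (e j * e j))) by (intros; unfold c; ring).
     rewrite fsum3. fold (dot n (tau t) (tau t)) (dot n e (tau t)) (dot n e e). rewrite He, dot_unit by (apply Htau; lra).
     fold (sg t). rewrite Hs0. lra. }
   pose proof (fsum_term_le n (fun j => (tau t j - c j) * (tau t j - c j)) i ltac:(intros j _; pose proof (Rle_0_sqr (tau t j - c j)); unfold Rsqr in *; lra) Hi).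
   unfold dot in Hdt. simpl in H0.
   assert ((tau t i - c i) * (tau t i - c i) < (eps / 4) * (eps / 4)) by lra.
   apply Rabs_def1; nra. }
 assert (Step5 : forall t i, 0 <= t <= L -> (i < n)%nat -> Rabs (tau t i - c i) < eps / 2).
 { intros t i Ht Hi.
   assert (Hmid : forall t1, eta <= t1 <= L - eta -> Rabs (t - t1) <= eta -> Rabs (tau t i - c i) < eps / 2).
   { intros t1 Ht1 Hd. pose proof (Step4 t1 i Ht1 Hi). pose proof (Mod t t1 i Ht ltac:(lra) Hi).
     assert (2 * Kp * Rabs (t - t1) <= 2 * Kp * (eps / (16 * Kp))) by (apply Rmult_le_compat_l; lra).
     replace (2 * Kp * (eps / (16 * Kp))) with (eps / 8) in H1 by (field; lra).
     replace (tau t i - c i) with ((tau t i - tau t1 i) + (tau t1 i - c i)) by ring.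
     eapply Rle_lt_trans. apply Rabs_triang. lra. }
   destruct (Rle_dec t eta). apply (Hmid eta); [lra|]. rewrite Rabs_left1 by lra. lra.
   destruct (Rle_dec t (L - eta)). apply (Hmid t); [lra|]. rewrite Rminus_diag, Rabs_R0; lra.
   apply (Hmid (L - eta)); [lra|]. rewrite Rabs_right by lra. lra. }
 intros t s i Ht Hs Hi. pose proof (Step5 t i Ht Hi). pose proof (Step5 s i Hs Hi).
 replace (tau t i - tau s i) with ((tau t i - c i) - (tau s i - c i)) by ring.
 eapply Rle_lt_trans. apply Rabs_triang. rewrite Rabs_Ropp. lra.
Qed.


Theorem mainTheorem6
  (n : nat) (ell : R) (alpha psi beta : R -> R) (L mu : R)
  (tau0 dtau0 : R -> vec) (tau dtau : R -> R -> vec) (k : R -> R) (Lam : R -> vec)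
  (Hn : (2 <= n)%nat)
  (Hell : 0 < ell)
  (Halpha_pos : forall s, 0 <= s <= ell -> 0 < alpha s)
  (Halpha_bv : bounded_variation alpha 0 ell)
  (Halpha_inv : exists C, forall s, 0 <= s <= ell -> / alpha s <= C)
  (Hpsi : forall s, 0 <= s <= ell -> HKint (fun sigma => / alpha sigma) 0 s (psi s))
  (HL : L = psi ell)
  (Hbeta : forall s, 0 <= s <= ell -> beta (psi s) = alpha s)
  (Hmu : 0 <= mu)
  (Htau0 : W1inf_sphere n L tau0 dtau0)
  (Htau : forall p, 2 <= p -> W1p_sphere n p L (tau p) (dtau p))
  (Hk : forall p, 2 <= p -> is_Kp n p L (dtau p) (k p))
  (Hklim : exists M P0, forall p, P0 <= p -> k p <= M)
  (Heq : forall p, 2 <= p ->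
     weak_eq n L
       (fun t i => rpow (vnorm n (dtau p t)) (p - 2) * dtau p t i)
       (fun t i => rpow (vnorm n (dtau p t)) p * tau p t i)
       (fun t i => rpow (k p) (p - 1) * beta t *
          (Lam p i - dot n (Lam p) (tau p t) * tau p t i
           - mu * tau0 t i + mu * dot n (tau0 t) (tau p t) * tau p t i))) :
  (exists M P0, forall p, P0 <= p -> vnorm n (Lam p) / p ^ 6 <= M)
  \/
  (exists ps : nat -> R,
     (forall j, 2 <= ps j) /\
     (forall M, exists N, forall j, (N <= j)%nat -> M <= ps j) /\
     exists c : vec, forall eps, 0 < eps -> exists N, forall j, (N <= j)%nat ->
       forall t, 0 < t < L -> vnorm n (vsub (tau (ps j) t) c) < eps).
Proof.
 assert (Hn0 : (0 < n)%nat) by lia.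
 destruct (beta_facts ell alpha psi beta L Hell Halpha_pos Halpha_bv Halpha_inv Hpsi HL Hbeta) as [HL0 [cb [Bb [Hcb Hbb]]]].
 destruct Htau0 as (_ & _ & Hunit0).
 destruct Hklim as [M0 [P0 HM0]]. set (Kp := Rabs M0 + 1).
 assert (HKp : 0 < Kp) by (unfold Kp; pose proof (Rabs_pos M0); lra).
 assert (HkK : forall p, P0 <= p -> k p <= Kp) by (intros p Hp; pose proof (HM0 p Hp); pose proof (Rle_abs M0); unfold Kp; lra).
 assert (Data : forall p, 2 <= p -> exists I, HKint (fun t => rpow (vnorm n (dtau p t)) p) 0 L I /\ k p = rpow (I / L) (/ p)).
 { intros p Hp. apply Hk; auto. }
 assert (Hk0 : forall p, 2 <= p -> 0 <= k p).
 { intros p Hp. destruct (Data p Hp) as [I [HI EI]]. destruct (k_facts n p L (dtau p) I (k p) HL0 Hp HI EI) as (_ & H & _). auto. }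
 assert (Unit : forall p t, 2 <= p -> 0 <= t <= L -> vnorm n (tau p t) = 1) by (intros p t Hp Ht; destruct (Htau p Hp) as (_ & _ & H); auto).
 assert (ModP : forall p t s i, 2 <= p -> 0 <= t <= L -> 0 <= s <= L -> (i < n)%nat ->
   Rabs (tau p t i - tau p s i) <= 2 * k p * Rabs (t - s) + L * k p / Rpower 2 (p - 1)).
 { intros p t s i Hp Ht Hs Hi. destruct (Data p Hp) as [I [HI EI]]. destruct (Htau p Hp) as (Hprim & _ & _).
   apply (modulus n p L (tau p) (dtau p) I (k p) i s t HL0 Hp Hprim HI EI Hi Hs Ht). }
 destruct (Classical_Prop.classic (exists M P0, forall p, P0 <= p -> vnorm n (Lam p) / p ^ 6 <= M)) as [Hyes|Hnot].
 left; auto. right.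
 assert (Hbig : forall M Q, exists p, Q <= p /\ M < vnorm n (Lam p) / p ^ 6).
 { intros M Q. apply Classical_Prop.NNPP. intros H. apply Hnot. exists M, Q. intros p Hp.
   apply Rnot_lt_le. intros H'. apply H. exists p; auto. }
 assert (Red : forall ps : nat -> R, (forall j, 2 <= ps j) -> (forall j, INR j <= ps j) ->
   (forall eps, 0 < eps -> exists N, forall j, (N <= j)%nat -> forall t s i, 0 <= t <= L -> 0 <= s <= L -> (i < n)%nat ->
      Rabs (tau (ps j) t i - tau (ps j) s i) < eps) ->
   exists ps' : nat -> R, (forall j, 2 <= ps' j) /\ (forall M, exists N, forall j, (N <= j)%nat -> M <= ps' j) /\
     exists c : vec, forall eps, 0 < eps -> exists N, forall j, (N <= j)%nat ->
       forall t, 0 < t < L -> vnorm n (vsub (tau (ps' j) t) c) < eps).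
 { intros ps H2 Hj Hosc. apply final_step with (ps := ps); auto.
   - intros M. destruct (INR_unbounded M) as [N HN]. exists N. intros j Hj'. pose proof (le_INR _ _ Hj'). specialize (Hj j). lra.
 }

 assert (Inv2 : forall p, 2 <= p -> / Rpower 2 (p - 1) <= 2 / p) by (intros; apply Rpower2_bound; lra).
 destruct (Classical_Prop.classic (forall kap, 0 < kap -> forall Q, exists p, Q <= p /\ 2 <= p /\ k p < kap)) as [HA|HnA].
 - assert (Hex : forall j : nat, exists p, Rmax (INR j) 2 <= p /\ 2 <= p /\ k p < / INR (S j)).
   { intros j. apply HA. apply Rinv_0_lt_compat, lt_0_INR; lia. }
   set (ps := fun j => proj1_sig (constructive_indefinite_description _ (Hex j))).
   assert (Hps : forall j, Rmax (INR j) 2 <= ps j /\ 2 <= ps j /\ k (ps j) < / INR (S j)).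
   { intros j. unfold ps. destruct (constructive_indefinite_description _ (Hex j)); auto. }
   apply (Red ps).
   + intros j; apply Hps.
   + intros j. pose proof (Rmax_l (INR j) 2). pose proof (Hps j). lra.
   + intros eps Heps. destruct (INR_unbounded (3 * L / eps)) as [N HN]. exists N.
     intros j Hj t s i Ht Hs Hi. destruct (Hps j) as (H1 & H2 & H3).
     pose proof (ModP (ps j) t s i H2 Ht Hs Hi). pose proof (Hk0 (ps j) H2).
     pose proof (Inv2 (ps j) H2). assert (2 / ps j <= 1) by (apply Rmult_le_reg_r with (ps j); [lra|]; unfold Rdiv; rewrite Rmult_assoc, Rinv_l by lra; lra).
     assert (Rabs (t - s) <= L) by (apply Rabs_le; lra).
     assert (L * k (ps j) / Rpower 2 (ps j - 1) <= L * k (ps j)).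
     { unfold Rdiv. rewrite <- (Rmult_1_r (L * k (ps j))) at 2. apply Rmult_le_compat_l. nra. lra. }
     assert (Hkj : k (ps j) * (3 * L) < eps).
     { assert (Q1 : INR N <= INR j) by (apply le_INR; auto).
       pose proof (pos_INR j) as Q0.
       assert (Q2 : k (ps j) * (INR j + 1) < 1). { rewrite S_INR in H3. apply Rmult_lt_reg_r with (/ (INR j + 1)). apply Rinv_0_lt_compat; lra.
         rewrite Rmult_assoc, Rinv_r, Rmult_1_l, Rmult_1_r by lra. lra. }
       assert (Q3 : 3 * L / eps < INR j + 1) by lra.
       assert (Q4 : 3 * L < (INR j + 1) * eps). { apply Rmult_lt_reg_r with (/ eps). apply Rinv_0_lt_compat; lra.
         replace ((INR j + 1) * eps * / eps) with (INR j + 1) by (field; lra). exact Q3. }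
       nra. }
     assert (2 * k (ps j) * Rabs (t - s) <= 2 * k (ps j) * L) by (apply Rmult_le_compat_l; lra).
     lra.
 - assert (HB : exists kap, 0 < kap /\ exists Q, forall p, Q <= p -> 2 <= p -> kap <= k p).
   { apply Classical_Prop.NNPP. intros H. apply HnA. intros kap Hkap Q. apply Classical_Prop.NNPP. intros H'.
     apply H. exists kap. split; auto. exists Q. intros p Hp Hp2. apply Rnot_lt_le. intros H''. apply H'. exists p; auto. }
   destruct HB as [kap [Hkap [Q HQ]]].
   assert (Hex : forall j : nat, exists p, Rmax (INR j) (Rmax 2 (Rmax P0 Q)) <= p /\ INR j < vnorm n (Lam p) / p ^ 6).
   { intros j. apply Hbig. }
   set (ps := fun j => proj1_sig (constructive_indefinite_description _ (Hex j))).
   assert (Hps : forall j, Rmax (INR j) (Rmax 2 (Rmax P0 Q)) <= ps j /\ INR j < vnorm n (Lam (ps j)) / ps j ^ 6).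
   { intros j. unfold ps. destruct (constructive_indefinite_description _ (Hex j)); auto. }
   assert (Hps' : forall j, INR j <= ps j /\ 2 <= ps j /\ P0 <= ps j /\ Q <= ps j /\ INR j < vnorm n (Lam (ps j))).
   { intros j. destruct (Hps j) as [H1 H2].
     pose proof (Rmax_l (INR j) (Rmax 2 (Rmax P0 Q))). pose proof (Rmax_r (INR j) (Rmax 2 (Rmax P0 Q))).
     pose proof (Rmax_l 2 (Rmax P0 Q)). pose proof (Rmax_r 2 (Rmax P0 Q)). pose proof (Rmax_l P0 Q). pose proof (Rmax_r P0 Q).
     assert (Hp1 : 1 <= ps j ^ 6) by (apply pow_R1_Rle; lra).
     assert (Hp6 : 0 < ps j ^ 6) by lra.
     assert (INR j * ps j ^ 6 < vnorm n (Lam (ps j))).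
     { apply Rmult_lt_reg_r with (/ ps j ^ 6). apply Rinv_0_lt_compat; lra.
       rewrite Rmult_assoc, Rinv_r, Rmult_1_r by lra. exact H2. }
     pose proof (pos_INR j). assert (INR j <= INR j * ps j ^ 6) by nra.
     repeat split; lra. }
   apply (Red ps).
   + intros j; apply Hps'.
   + intros j; apply Hps'.
   + intros eps Heps.
     destruct (caseB_core n L mu cb Bb Kp tau0 beta Hn0 HL0 Hcb Hmu HKp Hbb Hunit0 eps Heps) as [th [Hth [Thr Hcore]]].
     destruct (INR_unbounded (Rmax Thr (2 * L * Kp / th))) as [N HN]. exists N.
     intros j Hj t s i Ht Hs Hi. destruct (Hps' j) as (H1 & H2 & H3 & H4 & H5).
     assert (HjN : INR N <= INR j) by (apply le_INR; auto).
     pose proof (Rmax_l Thr (2 * L * Kp / th)). pose proof (Rmax_r Thr (2 * L * Kp / th)).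
     destruct (Data (ps j) H2) as [I [HI EI]]. destruct (Htau (ps j) H2) as (Hprim & _ & Hu).
     assert (Hkpos : 0 < k (ps j)) by (pose proof (HQ (ps j) H4 H2); lra).
     assert (Hkle : k (ps j) <= Kp) by (apply HkK; auto).
     assert (HThr : Thr < vnorm n (Lam (ps j))) by lra.
     assert (Hthb : L * Kp / Rpower 2 (ps j - 1) <= th).
     { pose proof (Inv2 (ps j) H2) as Q1.
       assert (Q0 : 0 < INR j). { assert (0 < 2 * L * Kp / th) by (apply Rdiv_lt_0_compat; nra). lra. }
       assert (Q2 : 2 / ps j <= 2 / INR j).
       { unfold Rdiv. apply Rmult_le_compat_l; [lra|]. apply Rinv_le_contravar; lra. }
       assert (Q3 : 2 * L * Kp / th < INR j) by lra.
       assert (Q4 : 2 * L * Kp < INR j * th). { apply Rmult_lt_reg_r with (/ th). apply Rinv_0_lt_compat; lra.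
         replace (INR j * th * / th) with (INR j) by (field; lra). exact Q3. }
       unfold Rdiv. assert (Q5 : 0 <= L * Kp) by nra.
       assert (Q6 : / Rpower 2 (ps j - 1) <= 2 / INR j) by lra.
       apply Rle_trans with (L * Kp * (2 / INR j)). apply Rmult_le_compat_l; auto.
       apply Rmult_le_reg_r with (INR j); auto. unfold Rdiv.
       replace (L * Kp * (2 * / INR j) * INR j) with (2 * L * Kp) by (field; lra). lra. }
     exact (Hcore (ps j) (tau (ps j)) (dtau (ps j)) I (k (ps j)) (Lam (ps j)) H2 Hprim Hu HI EI Hkpos Hkle (Heq (ps j) H2) Hthb HThr t s i Ht Hs Hi).
Qed.
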